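(* Let $F$ be a smooth real-valued function defined on an open neighbourhood of $\dot P_m$ in the real vector space of $m\times m$ Hermitian matrices, and let $\mathcal M(F)$ be the $m\times m$ matrix of its complex partial derivatives defined below. Then the gradient vector of $F|_{\dot P_m}$ at $\rho\in\dot P_m$ with respect to the quantum SLD Fisher metric is $$(\mathrm{grad}\,F)(\rho)=\tfrac12\big(\rho\,\mathcal M(F)+\mathcal M(F)\,\rho\big)-\operatorname{tr}\big(\rho\,\mathcal M(F)\big)\,\rho .$$ Consequently the gradient system $\frac{d\rho}{dt}=-(\mathrm{grad}\,F)(\rho)$ on $(\dot P_m,\langle\!\langle\cdot,\cdot\rangle\!\rangle^{QF})$ is governed by $$\frac{d\rho}{dt}=-\tfrac12\big(\rho\,\mathcal M(F)+\mathcal M(F)\,\rho\big)+\operatorname{tr}\big(\rho\,\mathcal M(F)\big)\,\rho .$$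
   Context: $\dot P_m$ denotes the set of $m\times m$ complex Hermitian positive definite matrices $\rho$ with $\operatorname{tr}\rho=1$ (regular density matrices). Its tangent space at $\rho$ is $T_\rho\dot P_m=\{\Xi\in M(m,m):\Xi^\dagger=\Xi,\ \operatorname{tr}\Xi=0\}$. For $\Xi\in T_\rho\dot P_m$ the symmetric logarithmic derivative $\mathcal L_\rho(\Xi)$ is the matrix with $\tfrac12(\rho\mathcal L_\rho(\Xi)+\mathcal L_\rho(\Xi)\rho)=\Xi$, and the quantum SLD Fisher metric is $\langle\!\langle\Xi,\Xi'\rangle\!\rangle^{QF}_\rho=\tfrac12\operatorname{tr}[\rho(\mathcal L_\rho(\Xi)\mathcal L_\rho(\Xi')+\mathcal L_\rho(\Xi')\mathcal L_\rho(\Xi))]$. The gradient $(\mathrm{grad}\,F)(\rho)\in T_\rho\dot P_m$ is defined by $\langle\!\langle(\mathrm{grad}\,F)(\rho),\Xi'\rangle\!\rangle^{QF}_\rho=\frac{d}{dt}\big|_{t=0}F(\gamma(t))$ for all $\Xi'\in T_\rho\dot P_m$, where $\gamma$ is any curve in $\dot P_m$ with $\gamma(0)=\rho$, $\gamma'(0)=\Xi'$. Write the entries of a Hermitian $\rho$ as $\rho_{jk}=\overline{\rho_{kj}}=x_{jk}+iy_{jk}$ ($j<k$, $x_{jk},y_{jk}$ real) and $\rho_{\ell\ell}=z_\ell$ real, and set $\partial/\partial\rho_{ab}=\tfrac12(\partial/\partial x_{ab}-i\,\partial/\partial y_{ab})$, $\partial/\partial\overline\rho_{ab}=\tfrac12(\partial/\partial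 x_{ab}+i\,\partial/\partial y_{ab})$ for $a<b$. Then $\mathcal M(F)$ is the $m\times m$ matrix with $(\mathcal M(F))_{jk}=\partial F/\partial\overline\rho_{jk}$ for $j<k$, $(\mathcal M(F))_{jk}=\partial F/\partial\rho_{kj}$ for $k<j$, and $(\mathcal M(F))_{jj}=\partial F/\partial z_j$. *)

(* Defs.v *)
(* Complex numbers are pairs (re, im) of reals; m x m complex matrices are
   functions nat -> nat -> C whose entries with indices >= m are ignored
   (all notions below only look at indices < m; equality is [meq m]). *)
From Stdlib Require Import Reals Lra List Arith Bool.
Import ListNotations.
Open Scope R_scope.
Local Open Scope bool_scope.

Definition Cx : Type := (R * R)%type.
Definition C0 : Cx := (0, 0).
Definition Cadd (a b : Cx) : Cx := (fst a + fst b, snd a + snd b).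
Definition Copp (a : Cx) : Cx := (- fst a, - snd a).
Definition Cmul (a b : Cx) : Cx :=
  (fst a * fst b - snd a * snd b, fst a * snd b + snd a * fst b).
Definition Cconj (a : Cx) : Cx := (fst a, - snd a).
Definition Csum (m : nat) (f : nat -> Cx) : Cx := fold_right Cadd C0 (map f (seq 0 m)).
Definition sumR (m : nat) (f : nat -> R) : R := fold_right Rplus 0 (map f (seq 0 m)).

Definition CMat : Type := nat -> nat -> Cx.
Definition madd (A B : CMat) : CMat := fun i j => Cadd (A i j) (B i j).
Definition mscale (c : Cx) (A : CMat) : CMat := fun i j => Cmul c (A i j).
Definition mmul (m : nat) (A B : CMat) : CMat :=
  fun i j => Csum m (fun k => Cmul (A i k) (B k j)).
Definition mtr (m : nat) (A : CMat) : Cx := Csum m (fun i => A i i).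
Definition meq (m : nat) (A B : CMat) : Prop :=
  forall i j, (i < m)%nat -> (j < m)%nat -> A i j = B i j.
Definition mdist (m : nat) (A B : CMat) : R :=
  sumR m (fun i => sumR m (fun j =>
    Rabs (fst (A i j) - fst (B i j)) + Rabs (snd (A i j) - snd (B i j)))).

Definition Herm (m : nat) (A : CMat) : Prop :=
  forall i j, (i < m)%nat -> (j < m)%nat -> A j i = Cconj (A i j).
Definition PosDef (m : nat) (A : CMat) : Prop :=
  forall v : nat -> Cx, (exists i, (i < m)%nat /\ v i <> C0) ->
    0 < fst (Csum m (fun i => Csum m (fun j => Cmul (Cconj (v i)) (Cmul (A i j) (v j))))).
Definition Pdot (m : nat) (rho : CMat) : Prop :=
  Herm m rho /\ PosDef m rho /\ mtr m rho = (1, 0).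
Definition Tangent (m : nat) (X : CMat) : Prop := Herm m X /\ mtr m X = C0.

Definition IsSLD (m : nat) (rho X L : CMat) : Prop :=
  meq m (mscale (1/2, 0) (madd (mmul m rho L) (mmul m L rho))) X.
(* (1/2) tr[rho (L L' + L' L)], which is real; we take its real part *)
Definition QFval (m : nat) (rho L L' : CMat) : R :=
  fst (Cmul (1/2, 0) (mtr m (mmul m rho (madd (mmul m L L') (mmul m L' L))))).

Definition CurveThrough (m : nat) (rho X : CMat) (g : R -> CMat) : Prop :=
  (exists eps, 0 < eps /\ forall t, Rabs t < eps -> Pdot m (g t)) /\
  meq m (g 0) rho /\
  (forall i j, (i < m)%nat -> (j < m)%nat ->
     derivable_pt_lim (fun t => fst (g t i j)) 0 (fst (X i j)) /\
     derivable_pt_lim (fun t => snd (g t i j)) 0 (snd (X i j))).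

Definition IsGrad (m : nat) (F : CMat -> R) (rho G : CMat) : Prop :=
  Tangent m G /\
  forall X, Tangent m X ->
  forall L L', IsSLD m rho G L -> IsSLD m rho X L' ->
  forall g, CurveThrough m rho X g ->
    derivable_pt_lim (fun t => F (g t)) 0 (QFval m rho L L').

Definition Ex (a b : nat) : CMat := fun i j =>
  if ((i =? a) && (j =? b)) || ((i =? b) && (j =? a)) then (1, 0) else C0.
Definition Ey (a b : nat) : CMat := fun i j =>
  if (i =? a) && (j =? b) then (0, 1)
  else if (i =? b) && (j =? a) then (0, -1) else C0.
Definition Ez (l : nat) : CMat := fun i j =>
  if (i =? l) && (j =? l) then (1, 0) else C0.
Definition Dir (m : nat) (E : CMat) : Prop :=
  (exists a b, (a < b)%nat /\ (b < m)%nat /\ (E = Ex a b \/ E = Ey a b)) \/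
  (exists l, (l < m)%nat /\ E = Ez l).

Definition PDeriv (f : CMat -> R) (p E : CMat) (v : R) : Prop :=
  derivable_pt_lim (fun t => f (madd p (mscale (t, 0) E))) 0 v.

Definition OpenHerm (m : nat) (U : CMat -> Prop) : Prop :=
  (forall p, U p -> Herm m p) /\
  forall p, U p -> exists eps, 0 < eps /\
    forall q, Herm m q -> mdist m p q < eps -> U q.

Definition ContOn (m : nat) (U : CMat -> Prop) (f : CMat -> R) : Prop :=
  forall p, U p -> forall eps, 0 < eps -> exists delta, 0 < delta /\
    forall q, U q -> mdist m p q < delta -> Rabs (f q - f p) < eps.

Fixpoint CkOn (m : nat) (U : CMat -> Prop) (k : nat) (f : CMat -> R) : Prop :=
  match k with
  | O => ContOn m U f
  | S k' => ContOn m U f /\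
      forall E, Dir m E -> exists g : CMat -> R,
        (forall p, U p -> PDeriv f p E (g p)) /\ CkOn m U k' g
  end.
Definition SmoothOn (m : nat) (U : CMat -> Prop) (f : CMat -> R) : Prop :=
  forall k, CkOn m U k f.

Definition IsMF (m : nat) (F : CMat -> R) (rho M : CMat) : Prop :=
  forall j k, (j < m)%nat -> (k < m)%nat ->
    ((j < k)%nat -> exists dx dy, PDeriv F rho (Ex j k) dx /\ PDeriv F rho (Ey j k) dy /\
                                  M j k = (dx / 2, dy / 2)) /\
    ((k < j)%nat -> exists dx dy, PDeriv F rho (Ex k j) dx /\ PDeriv F rho (Ey k j) dy /\
                                  M j k = (dx / 2, - dy / 2)) /\
    (j = k -> exists dz, PDeriv F rho (Ez j) dz /\ M j j = (dz, 0)).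

Definition gradFormula (m : nat) (rho M : CMat) : CMat :=
  madd (mscale (1/2, 0) (madd (mmul m rho M) (mmul m M rho)))
       (mscale (Copp (mtr m (mmul m rho M))) rho).
Definition odeRHS (m : nat) (rho M : CMat) : CMat :=
  madd (mscale (- (1/2), 0) (madd (mmul m rho M) (mmul m M rho)))
       (mscale (mtr m (mmul m rho M)) rho).

(* Main.v *)
Require Import Defs.
From Stdlib Require Import Reals.
Open Scope R_scope.
From Stdlib Require Import Lra Lia List Arith Bool Classical ClassicalEpsilon FunctionalExtensionality PropExtensionality Setoid Morphisms.
Import ListNotations.

Module LA.
From HB Require Import structures.
From mathcomp Require Import all_boot all_algebra.

Definition RR : Type := R.

Definition Req_b (x y : RR) : bool := if Req_EM_T x y then true else false.
Lemma Req_bP : Equality.axiom Req_b.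
Proof. move=> x y; rewrite /Req_b; case: Req_EM_T => h; constructor => //. Qed.
HB.instance Definition _ := hasDecEq.Build RR Req_bP.

Definition RR_find (P : pred RR) (n : nat) : option RR :=
  match excluded_middle_informative (exists x, P x) with
  | left h => Some (proj1_sig (constructive_indefinite_description _ h))
  | right _ => None
  end.
Lemma RR_find_correct P n x : RR_find P n = Some x -> P x.
Proof.
rewrite /RR_find; case: excluded_middle_informative => // h [<-].
exact: proj2_sig (constructive_indefinite_description _ h).
Qed.
Lemma RR_find_complete (P : pred RR) : (exists x, P x) -> exists n, RR_find P n.
Proof. move=> h; exists 0%N; rewrite /RR_find; case: excluded_middle_informative => //. Qed.
Lemma RR_find_ext (P Q : pred RR) : P =1 Q -> RR_find P =1 RR_find Q.
Proof.
move=> hPQ n; have -> : P = Q by apply: functional_extensionality => x; exact: hPQ.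
by [].
Qed.
HB.instance Definition _ := hasChoice.Build RR RR_find_correct RR_find_complete RR_find_ext.

Lemma RRaddA : associative (Rplus : RR -> RR -> RR). Proof. move=> x y z; rewrite /=; lra. Qed.
Lemma RRaddC : commutative (Rplus : RR -> RR -> RR). Proof. move=> x y; rewrite /=; lra. Qed.
Lemma RRadd0 : left_id (R0 : RR) Rplus. Proof. move=> x; rewrite /=; lra. Qed.
Lemma RRaddN : left_inverse (R0 : RR) Ropp Rplus. Proof. move=> x; rewrite /=; lra. Qed.
HB.instance Definition _ := GRing.isZmodule.Build RR RRaddA RRaddC RRadd0 RRaddN.

Lemma RRmulA : associative (Rmult : RR -> RR -> RR). Proof. move=> x y z; symmetry; exact: Rmult_assoc. Qed.
Lemma RRmulC : commutative (Rmult : RR -> RR -> RR). Proof. move=> x y; exact: Rmult_comm. Qed.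
Lemma RRmul1 : left_id (R1 : RR) Rmult. Proof. move=> x; exact: Rmult_1_l. Qed.
Lemma RRmulD : left_distributive (Rmult : RR -> RR -> RR) Rplus. Proof. move=> x y z; exact: Rmult_plus_distr_r. Qed.
Lemma RR1n0 : (R1 : RR) != 0%R. Proof. apply/eqP; exact: R1_neq_R0. Qed.
HB.instance Definition _ := GRing.Zmodule_isComNzRing.Build RR RRmulA RRmulC RRmul1 RRmulD RR1n0.

Local Open Scope ring_scope.
Import GRing.Theory.
Definition RRinv (x : RR) : RR := Rinv x.
Lemma RRmulV (x : RR) : x != 0 -> RRinv x * x = 1.
Proof. move=> /eqP h; rewrite /RRinv /GRing.mul /=. by apply: Rinv_l. Qed.
Lemma RRinv0 : RRinv 0 = 0. Proof. exact: Rinv_0. Qed.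
HB.instance Definition _ := GRing.ComNzRing_isField.Build RR RRmulV RRinv0.


Section LS.
Variable N : nat.
Variable f : (nat -> RR) -> (nat -> RR).
Hypothesis fadd : forall x y k, f (fun i => Rplus (x i) (y i)) k = Rplus (f x k) (f y k).
Hypothesis fscal : forall c x k, f (fun i => Rmult c (x i)) k = Rmult c (f x k).

Lemma f0 k : f (fun _ => R0) k = R0.
Proof.
have -> : (fun _ : nat => R0) = (fun i => Rmult R0 ((fun _ => R0) i)).
  by apply: functional_extensionality => i /=; rewrite Rmult_0_l.
by rewrite fscal Rmult_0_l.
Qed.

Definition ebas (i : nat) : nat -> RR := fun l => if Nat.eqb l i then R1 else R0.

Lemma f_sum (r : seq 'I_N) (c : 'I_N -> RR) k :
  f (fun l => \sum_(i <- r) c i * ebas i l) k = \sum_(i <- r) c i * f (ebas i) k.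
Proof.
elim: r => [|a r IH].
  rewrite big_nil; have -> : (fun l : nat => \sum_(i <- [::]) c i * ebas i l) = (fun _ => R0).
    by apply: functional_extensionality => l; rewrite big_nil.
  exact: f0.
rewrite big_cons.
have -> : (fun l : nat => \sum_(i <- a :: r) c i * ebas i l) =
  (fun l => Rplus ((fun l => Rmult (c a) (ebas a l)) l) ((fun l => \sum_(i <- r) c i * ebas i l) l)).
  by apply: functional_extensionality => l; rewrite big_cons.
by rewrite fadd IH fscal.
Qed.
End LS.

Lemma lin_surj (N : nat) (f : (nat -> R) -> (nat -> R))
  (fadd : forall x y k, f (fun i => Rplus (x i) (y i)) k = Rplus (f x k) (f y k))
  (fscal : forall c x k, f (fun i => Rmult c (x i)) k = Rmult c (f x k))
  (floc : forall x y, (forall i, lt i N -> x i = y i) -> forall k, f x k = f y k)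
  (finj : forall x, (forall k, lt k N -> f x k = R0) -> forall i, lt i N -> x i = R0) :
  forall y : nat -> R, exists x, forall k, lt k N -> f x k = y k.
Proof.
move=> y.
pose A : 'M[RR]_N := \matrix_(i, j) f (ebas i) j.
pose vec (v : 'rV[RR]_N) : nat -> RR := fun l =>
  match ltnP l N with LtnNotGeq h => v 0 (Ordinal h) | _ => R0 end.
have Hvec : forall v (j : 'I_N), (v *m A) 0 j = f (vec v) j.
  move=> v j; rewrite mxE.
  under eq_bigr => i _ do rewrite mxE.
  rewrite -(@f_sum N f fadd fscal).
  apply: floc => l hl.
  have hl' : (l < N)%N by apply/ltP.
  rewrite (bigD1 (Ordinal hl')) //= big1 ?addr0.
    rewrite /ebas /vec Nat.eqb_refl.
    case: ltnP => [h|h]; last by have := leq_trans hl' h; rewrite ltnn.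
    by rewrite mulr1; congr (v 0 _); apply: val_inj.
  move=> i hi; rewrite /ebas.
  case: (Nat.eqb_spec l i) => [e|_]; last by rewrite mulr0.
  by case/eqP: hi; apply: val_inj; rewrite /= -e.
have Ainj : forall v : 'rV[RR]_N, v *m A = 0 -> v = 0.
  move=> v hv; apply/rowP => i; rewrite mxE.
  have := finj (vec v) _ i (elimT ltP (ltn_ord i)).
  rewrite /vec; case: ltnP => [h|h]; last by have := leq_trans (ltn_ord i) h; rewrite ltnn.
  have -> : Ordinal h = i by apply: val_inj.
  apply => k hk; have hk' : (k < N)%N by apply/ltP.
  by rewrite -[k]/(nat_of_ord (Ordinal hk')) -Hvec hv mxE.
have uA : A \in unitmx by rewrite -row_free_unit; apply: inj_row_free.
pose yr : 'rV[RR]_N := \row_j y j.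
exists (vec (yr *m invmx A)) => k hk.
have hk' : (k < N)%N by apply/ltP.
by rewrite -[k]/(nat_of_ord (Ordinal hk')) -Hvec mulmxKV // mxE.
Qed.
End LA.

Set Bullet Behavior "Strict Subproofs".
Open Scope R_scope.


Lemma Ceq (a b : Cx) : fst a = fst b -> snd a = snd b -> a = b.
Proof. destruct a, b; simpl; intros; subst; reflexivity. Qed.

Ltac cunf := unfold Cadd, Cmul, Copp, Cconj, C0, madd, mscale in *; simpl in *.
Ltac csolve := apply Ceq; cunf; ring.

Lemma fold_Rplus_acc (l : list R) (a : R) :
  fold_right Rplus a l = fold_right Rplus 0 l + a.
Proof. induction l; simpl; [ring | rewrite IHl; ring]. Qed.

Lemma sumR_0 f : sumR 0 f = 0.
Proof. reflexivity. Qed.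

Lemma sumR_S m f : sumR (S m) f = sumR m f + f m.
Proof.
  unfold sumR. rewrite seq_S, map_app, fold_right_app. simpl.
  rewrite fold_Rplus_acc. ring.
Qed.

Lemma fst_Csum m f : fst (Csum m f) = sumR m (fun i => fst (f i)).
Proof.
  unfold Csum, sumR. generalize (seq 0 m). induction l; simpl; auto.
  rewrite IHl; reflexivity.
Qed.
Lemma snd_Csum m f : snd (Csum m f) = sumR m (fun i => snd (f i)).
Proof.
  unfold Csum, sumR. generalize (seq 0 m). induction l; simpl; auto.
  rewrite IHl; reflexivity.
Qed.

Lemma sumR_ext m f g : (forall i, (i < m)%nat -> f i = g i) -> sumR m f = sumR m g.
Proof.
  induction m; intros H; auto. rewrite !sumR_S, IHm, H; auto; intros; apply H; lia.
Qed.

Lemma sumR_plus m f g : sumR m (fun i => f i + g i) = sumR m f + sumR m g.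
Proof. induction m. unfold sumR; simpl; ring. rewrite !sumR_S, IHm; ring. Qed.

Lemma sumR_scal m c f : sumR m (fun i => c * f i) = c * sumR m f.
Proof. induction m. unfold sumR; simpl; ring. rewrite !sumR_S, IHm; ring. Qed.

Lemma sumR_opp m f : sumR m (fun i => - f i) = - sumR m f.
Proof. induction m. unfold sumR; simpl; ring. rewrite !sumR_S, IHm; ring. Qed.

Lemma sumR_const0 m : sumR m (fun _ => 0) = 0.
Proof. induction m; [reflexivity|rewrite sumR_S, IHm; ring]. Qed.

Lemma sumR_zero m f : (forall i, (i < m)%nat -> f i = 0) -> sumR m f = 0.
Proof. intros H. rewrite (sumR_ext m f (fun _ => 0)); auto. apply sumR_const0. Qed.

Lemma sumR_swap m n f :
  sumR m (fun i => sumR n (fun j => f i j)) = sumR n (fun j => sumR m (fun i => f i j)).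
Proof.
  induction m.
  - rewrite sumR_0. symmetry. apply sumR_const0.
  - rewrite sumR_S, IHm. rewrite <- sumR_plus. apply sumR_ext. intros. rewrite sumR_S. ring.
Qed.

Lemma sumR_le m f g : (forall i, (i < m)%nat -> f i <= g i) -> sumR m f <= sumR m g.
Proof.
  induction m; intros H. cbn; lra. rewrite !sumR_S.
  assert (sumR m f <= sumR m g) by (apply IHm; intros; apply H; lia).
  assert (f m <= g m) by (apply H; lia). lra.
Qed.

Lemma sumR_nonneg m f : (forall i, (i < m)%nat -> 0 <= f i) -> 0 <= sumR m f.
Proof. intros H. rewrite <- (sumR_const0 m). apply sumR_le; auto. Qed.

Lemma sumR_nonneg_zero m f : (forall i, (i < m)%nat -> 0 <= f i) -> sumR m f = 0 ->
  forall i, (i < m)%nat -> f i = 0.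
Proof.
  induction m; intros H Hs i Hi. lia. rewrite sumR_S in Hs.
  assert (0 <= sumR m f) by (apply sumR_nonneg; intros; apply H; lia).
  assert (0 <= f m) by (apply H; lia).
  destruct (Nat.eq_dec i m). subst; lra.
  apply IHm; [intros; apply H; lia | lra | lia].
Qed.

Lemma sumR_abs m f : Rabs (sumR m f) <= sumR m (fun i => Rabs (f i)).
Proof.
  induction m. cbn. rewrite Rabs_R0; lra. rewrite !sumR_S.
  eapply Rle_trans. apply Rabs_triang. lra.
Qed.

Lemma sumR_delta m i v : (i < m)%nat ->
  sumR m (fun l => if Nat.eqb l i then v else 0) = v.
Proof.
  induction m; intros H. lia. rewrite sumR_S.
  destruct (Nat.eq_dec i m).
  - subst. rewrite Nat.eqb_refl. rewrite sumR_zero. ring.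
    intros j Hj. destruct (Nat.eqb_spec j m); [lia|auto].
  - destruct (Nat.eqb_spec m i); [lia|]. rewrite IHm; [ring|lia].
Qed.

Lemma sumR_delta0 m i v : (m <= i)%nat ->
  sumR m (fun l => if Nat.eqb l i then v else 0) = 0.
Proof.
  intros H. apply sumR_zero. intros j Hj. destruct (Nat.eqb_spec j i); [lia|auto].
Qed.

Lemma sumR_square m f :
  sumR m (fun i => sumR m (fun k => f i k)) =
  sumR m (fun i => f i i) + sumR m (fun b => sumR b (fun a => f a b + f b a)).
Proof.
  induction m. cbn; ring.
  rewrite !sumR_S.
  rewrite (sumR_ext m (fun i => sumR (S m) (fun k => f i k)) (fun i => sumR m (fun k => f i k) + f i m))
    by (intros; apply sumR_S).
  rewrite sumR_plus, IHm, sumR_plus. change (sumR m (fun k => f m k)) with (sumR m (f m)); ring.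
Qed.

Lemma Csum_ext m f g : (forall i, (i < m)%nat -> f i = g i) -> Csum m f = Csum m g.
Proof.
  intros H; apply Ceq; rewrite ?fst_Csum, ?snd_Csum; apply sumR_ext; intros; rewrite H; auto.
Qed.

Lemma sumR_minus m f g : sumR m (fun i => f i - g i) = sumR m f - sumR m g.
Proof. induction m. unfold sumR; simpl; ring. rewrite !sumR_S, IHm; ring. Qed.

Lemma sumR_scal_r m c f : sumR m (fun i => f i * c) = sumR m f * c.
Proof. induction m. unfold sumR; simpl; ring. rewrite !sumR_S, IHm; ring. Qed.

Ltac cs := rewrite ?fst_Csum, ?snd_Csum; unfold Cadd, Cmul, Copp, Cconj, C0; cbn [fst snd]; rewrite ?fst_Csum, ?snd_Csum.

Lemma Csum_S m f : Csum (S m) f = Cadd (Csum m f) (f m).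
Proof. apply Ceq; unfold Cadd at 1; cbn [fst snd]; rewrite ?fst_Csum, ?snd_Csum, sumR_S; reflexivity. Qed.

Lemma Csum_plus m f g : Csum m (fun i => Cadd (f i) (g i)) = Cadd (Csum m f) (Csum m g).
Proof. apply Ceq; cs; apply sumR_plus. Qed.

Lemma Csum_mul_l m a f : Cmul a (Csum m f) = Csum m (fun i => Cmul a (f i)).
Proof.
  apply Ceq; cs; rewrite ?sumR_minus, ?sumR_plus, !sumR_scal; ring.
Qed.

Lemma Csum_mul_r m a f : Cmul (Csum m f) a = Csum m (fun i => Cmul (f i) a).
Proof.
  apply Ceq; cs; rewrite ?sumR_minus, ?sumR_plus, !sumR_scal_r; ring.
Qed.

Lemma Csum_swap m n f :
  Csum m (fun i => Csum n (fun j => f i j)) = Csum n (fun j => Csum m (fun i => f i j)).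
Proof.
  apply Ceq.
  - rewrite !fst_Csum.
    rewrite (sumR_ext m _ (fun i => sumR n (fun j => fst (f i j)))) by (intros; apply fst_Csum).
    rewrite sumR_swap; apply sumR_ext; intros; rewrite fst_Csum; reflexivity.
  - rewrite !snd_Csum.
    rewrite (sumR_ext m _ (fun i => sumR n (fun j => snd (f i j)))) by (intros; apply snd_Csum).
    rewrite sumR_swap; apply sumR_ext; intros; rewrite snd_Csum; reflexivity.
Qed.

Lemma Csum_zero m f : (forall i, (i < m)%nat -> f i = C0) -> Csum m f = C0.
Proof.
  intros H; apply Ceq; cs; apply sumR_zero; intros; rewrite H; auto.
Qed.

Lemma Cmul_assoc a b c : Cmul (Cmul a b) c = Cmul a (Cmul b c). Proof. csolve. Qed.
Lemma Cmul_comm a b : Cmul a b = Cmul b a. Proof. csolve. Qed.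
Lemma Cadd_comm a b : Cadd a b = Cadd b a. Proof. csolve. Qed.
Lemma Cmul_add_r a b c : Cmul a (Cadd b c) = Cadd (Cmul a b) (Cmul a c). Proof. csolve. Qed.
Lemma Cmul_add_l a b c : Cmul (Cadd a b) c = Cadd (Cmul a c) (Cmul b c). Proof. csolve. Qed.
Lemma Cconj_mul a b : Cconj (Cmul a b) = Cmul (Cconj a) (Cconj b). Proof. csolve. Qed.
Lemma Cconj_add a b : Cconj (Cadd a b) = Cadd (Cconj a) (Cconj b). Proof. csolve. Qed.
Lemma Cconj_conj a : Cconj (Cconj a) = a. Proof. csolve. Qed.
Lemma Cconj_Csum m f : Cconj (Csum m f) = Csum m (fun i => Cconj (f i)).
Proof.
  apply Ceq; cs; auto.
  rewrite <- sumR_opp; reflexivity.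
Qed.

Lemma mmul_assoc m A B C i j :
  mmul m (mmul m A B) C i j = mmul m A (mmul m B C) i j.
Proof.
  unfold mmul.
  rewrite (Csum_ext m _ (fun k => Csum m (fun l => Cmul (Cmul (A i l) (B l k)) (C k j))))
    by (intros; apply Csum_mul_r).
  rewrite Csum_swap. apply Csum_ext. intros l _. rewrite Csum_mul_l.
  apply Csum_ext. intros; apply Cmul_assoc.
Qed.

Lemma mtr_comm m A B : mtr m (mmul m A B) = mtr m (mmul m B A).
Proof.
  unfold mtr, mmul. rewrite Csum_swap. apply Csum_ext. intros; apply Csum_ext; intros; apply Cmul_comm.
Qed.

Lemma mtr_ext m A B : meq m A B -> mtr m A = mtr m B.
Proof. intros H; unfold mtr; apply Csum_ext; intros; apply H; auto. Qed.

Lemma mmul_ext m A A' B B' : meq m A A' -> meq m B B' -> meq m (mmul m A B) (mmul m A' B').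
Proof. intros H1 H2 i j Hi Hj; unfold mmul; apply Csum_ext; intros; rewrite H1, H2; auto. Qed.

Lemma mtr_madd m A B : mtr m (madd A B) = Cadd (mtr m A) (mtr m B).
Proof. unfold mtr, madd. apply Csum_plus. Qed.

Lemma mtr_mscale m c A : mtr m (mscale c A) = Cmul c (mtr m A).
Proof. unfold mtr, mscale. rewrite Csum_mul_l. reflexivity. Qed.

Lemma mmul_madd_r m A B C i j : mmul m A (madd B C) i j = Cadd (mmul m A B i j) (mmul m A C i j).
Proof. unfold mmul, madd. rewrite <- Csum_plus. apply Csum_ext; intros; apply Cmul_add_r. Qed.
Lemma mmul_madd_l m A B C i j : mmul m (madd A B) C i j = Cadd (mmul m A C i j) (mmul m B C i j).
Proof. unfold mmul, madd. rewrite <- Csum_plus. apply Csum_ext; intros; apply Cmul_add_l. Qed.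
Lemma mmul_mscale_r m c A B i j : mmul m A (mscale c B) i j = Cmul c (mmul m A B i j).
Proof. unfold mmul, mscale. rewrite Csum_mul_l. apply Csum_ext; intros; csolve. Qed.
Lemma mmul_mscale_l m c A B i j : mmul m (mscale c A) B i j = Cmul c (mmul m A B i j).
Proof. unfold mmul, mscale. rewrite Csum_mul_l. apply Csum_ext; intros; csolve. Qed.

Lemma meq_refl m A : meq m A A. Proof. intros i j _ _; reflexivity. Qed.
Lemma meq_sym m A B : meq m A B -> meq m B A. Proof. intros H i j Hi Hj; symmetry; auto. Qed.
Lemma meq_trans m A B C : meq m A B -> meq m B C -> meq m A C.
Proof. intros H1 H2 i j Hi Hj; rewrite H1; auto. Qed.

Lemma mtr_mmul_madd_r m A B C : mtr m (mmul m A (madd B C)) = Cadd (mtr m (mmul m A B)) (mtr m (mmul m A C)).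
Proof. rewrite <- mtr_madd. unfold mtr. apply Csum_ext; intros; apply mmul_madd_r. Qed.
Lemma mtr_mmul_madd_l m A B C : mtr m (mmul m (madd A B) C) = Cadd (mtr m (mmul m A C)) (mtr m (mmul m B C)).
Proof. rewrite <- mtr_madd. unfold mtr. apply Csum_ext; intros; apply mmul_madd_l. Qed.
Lemma mtr_mmul_mscale_l m c A B : mtr m (mmul m (mscale c A) B) = Cmul c (mtr m (mmul m A B)).
Proof. rewrite <- mtr_mscale. unfold mtr. apply Csum_ext; intros; apply mmul_mscale_l. Qed.
Lemma mtr_assoc m A B C : mtr m (mmul m (mmul m A B) C) = mtr m (mmul m A (mmul m B C)).
Proof. unfold mtr. apply Csum_ext; intros; apply mmul_assoc. Qed.

Lemma QF_trace m rho L L' S :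
  IsSLD m rho S L -> QFval m rho L L' = fst (mtr m (mmul m S L')).
Proof.
  intros H. unfold QFval.
  rewrite mtr_mmul_madd_r.
  rewrite <- !mtr_assoc.
  rewrite (mtr_comm m (mmul m rho L') L), <- mtr_assoc.
  rewrite <- mtr_mmul_madd_l.
  rewrite (mtr_ext m (mmul m S L') (mmul m (mscale (1/2,0) (madd (mmul m rho L) (mmul m L rho))) L')).
  2:{ apply mmul_ext. apply meq_sym; exact H. apply meq_refl. }
  rewrite mtr_mmul_mscale_l. reflexivity.
Qed.

Lemma QF_sym m rho L L' : QFval m rho L L' = QFval m rho L' L.
Proof.
  unfold QFval. f_equal. f_equal. unfold mtr. apply Csum_ext; intros.
  unfold mmul at 1. unfold mmul at 2. apply Csum_ext; intros. f_equal. unfold madd. apply Cadd_comm.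
Qed.


Lemma herm_mmul_conj m A B : Herm m A -> Herm m B ->
  forall i j, (i < m)%nat -> (j < m)%nat -> mmul m A B j i = Cconj (mmul m B A i j).
Proof.
  intros HA HB i j Hi Hj. unfold mmul. rewrite Cconj_Csum. apply Csum_ext. intros k Hk.
  rewrite Cconj_mul, HA, HB by auto. apply Cmul_comm.
Qed.

Lemma herm_madd m A B : Herm m A -> Herm m B -> Herm m (madd A B).
Proof. intros HA HB i j Hi Hj. unfold madd. rewrite HA, HB by auto. csolve. Qed.

Lemma herm_mscale m c A : snd c = 0 -> Herm m A -> Herm m (mscale c A).
Proof.
  intros Hc HA i j Hi Hj. unfold mscale. rewrite HA by auto. destruct c; simpl in Hc; subst. csolve.
Qed.

Lemma herm_diag_real m A i : Herm m A -> (i < m)%nat -> snd (A i i) = 0.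
Proof.
  intros H Hi. pose proof (H i i Hi Hi) as E. destruct (A i i) as [x y]. unfold Cconj in E; simpl in *.
  injection E; intros; lra.
Qed.

Lemma herm_tr_real m A : Herm m A -> snd (mtr m A) = 0.
Proof.
  intros H. unfold mtr. rewrite snd_Csum. apply sumR_zero. intros; eapply herm_diag_real; eauto.
Qed.

Lemma conj_snd0 (a : Cx) : Cconj a = a -> snd a = 0.
Proof. destruct a as [x y]; unfold Cconj; simpl; intros E; injection E; intros; lra. Qed.

Lemma tr_prod_real m A B : Herm m A -> Herm m B -> snd (mtr m (mmul m A B)) = 0.
Proof.
  intros HA HB. apply conj_snd0. unfold mtr. rewrite Cconj_Csum.
  rewrite (Csum_ext m _ (fun i => mmul m B A i i)).
  2:{ intros i Hi. rewrite <- herm_mmul_conj by auto. reflexivity. }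
  change (mtr m (mmul m B A) = mtr m (mmul m A B)). apply mtr_comm.
Qed.

Lemma herm_grad m rho M : Herm m rho -> Herm m M -> Herm m (gradFormula m rho M).
Proof.
  intros Hr HM. unfold gradFormula. apply herm_madd.
  - intros i j Hi Hj. unfold mscale, madd.
    rewrite (herm_mmul_conj m rho M Hr HM i j Hi Hj), (herm_mmul_conj m M rho HM Hr i j Hi Hj). csolve.
  - apply herm_mscale; auto. unfold Copp; simpl. rewrite tr_prod_real by auto. ring.
Qed.

Lemma tr_grad m rho M : mtr m rho = (1,0) -> mtr m (gradFormula m rho M) = C0.
Proof.
  intros Ht. unfold gradFormula. rewrite mtr_madd, !mtr_mscale, mtr_madd, Ht.
  rewrite (mtr_comm m M rho). apply Ceq; cunf; lra.
Qed.

Lemma PDeriv_uniq f p E v1 v2 : PDeriv f p E v1 -> PDeriv f p E v2 -> v1 = v2.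
Proof. unfold PDeriv. intros; eapply uniqueness_limite; eauto. Qed.

Lemma IsMF_herm m F rho M : IsMF m F rho M -> Herm m M.
Proof.
  intros H i j Hi Hj.
  destruct (lt_eq_lt_dec i j) as [[Hij|Hij]|Hij].
  - destruct (H i j Hi Hj) as [H1 _]. destruct (H1 Hij) as (dx & dy & Px & Py & E1).
    destruct (H j i Hj Hi) as [_ [H2 _]]. destruct (H2 Hij) as (dx' & dy' & Px' & Py' & E2).
    rewrite E1, E2. rewrite (PDeriv_uniq _ _ _ _ _ Px Px'), (PDeriv_uniq _ _ _ _ _ Py Py').
    unfold Cconj; simpl. f_equal; lra.
  - subst. destruct (H j j Hi Hi) as [_ [_ H3]]. destruct (H3 eq_refl) as (dz & _ & E).
    rewrite E. unfold Cconj; simpl; f_equal; lra.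
  - destruct (H j i Hj Hi) as [H1 _]. destruct (H1 Hij) as (dx & dy & Px & Py & E1).
    destruct (H i j Hi Hj) as [_ [H2 _]]. destruct (H2 Hij) as (dx' & dy' & Px' & Py' & E2).
    rewrite E1, E2. rewrite (PDeriv_uniq _ _ _ _ _ Px Px'), (PDeriv_uniq _ _ _ _ _ Py Py').
    unfold Cconj; simpl. f_equal; lra.
Qed.

Lemma tangent_grad m F rho M : Pdot m rho -> IsMF m F rho M -> Tangent m (gradFormula m rho M).
Proof.
  intros [Hr [_ Ht]] HM. split. apply herm_grad; auto. eapply IsMF_herm; eauto. apply tr_grad; auto.
Qed.

Lemma tr_rhoL m rho X L : IsSLD m rho X L -> mtr m (mmul m rho L) = mtr m X.
Proof.
  intros H. rewrite (mtr_ext m X _ (meq_sym _ _ _ H)). rewrite mtr_mscale, mtr_madd.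
  rewrite (mtr_comm m L rho). apply Ceq; unfold Cadd, Cmul; simpl; lra.
Qed.

Lemma grad_value m rho M X L L' :
  mtr m X = C0 -> IsSLD m rho (gradFormula m rho M) L -> IsSLD m rho X L' ->
  QFval m rho L L' = fst (mtr m (mmul m M X)).
Proof.
  intros HX HG HXL.
  rewrite (QF_trace _ _ _ _ _ HG). unfold gradFormula.
  rewrite mtr_mmul_madd_l, (mtr_mmul_mscale_l m (Copp _) rho L').
  rewrite (tr_rhoL _ _ _ _ HXL), HX.
  set (T := mtr m (mmul m (mscale (1/2,0) (madd (mmul m rho M) (mmul m M rho))) L')).
  assert (E : QFval m rho M L' = fst T) by (apply QF_trace; apply meq_refl).
  rewrite QF_sym, (QF_trace _ _ _ _ _ HXL), mtr_comm in E.
  unfold Cadd, Cmul, C0; simpl. rewrite <- E. ring.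
Qed.


Inductive dir := DZ (l : nat) | DX (a b : nat) | DY (a b : nat).
Definition dmat (d : dir) : CMat :=
  match d with DZ l => Ez l | DX a b => Ex a b | DY a b => Ey a b end.
Definition dcoord (d : dir) (A : CMat) : R :=
  match d with DZ l => fst (A l l) | DX a b => fst (A a b) | DY a b => snd (A a b) end.
Definition dvalid (m : nat) (d : dir) : Prop :=
  match d with DZ l => (l < m)%nat | DX a b => (a < b < m)%nat | DY a b => (a < b < m)%nat end.
Definition dirs (m : nat) : list dir :=
  map DZ (seq 0 m) ++ flat_map (fun b => flat_map (fun a => [DX a b; DY a b]) (seq 0 b)) (seq 0 m).
Definition sumD (l : list dir) (h : dir -> R) : R := fold_right (fun d acc => h d + acc) 0 l.

Lemma sumD_app l1 l2 h : sumD (l1 ++ l2) h = sumD l1 h + sumD l2 h.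
Proof. induction l1; simpl. ring. rewrite IHl1; ring. Qed.

Lemma sumD_map (g : nat -> dir) l h :
  sumD (map g l) h = fold_right Rplus 0 (map (fun i => h (g i)) l).
Proof. induction l; simpl; auto. rewrite IHl; auto. Qed.

Lemma sumD_flat (k : nat -> list dir) l h :
  sumD (flat_map k l) h = fold_right Rplus 0 (map (fun i => sumD (k i) h) l).
Proof. induction l; simpl; auto. rewrite sumD_app, IHl; auto. Qed.

Lemma sumD_dirs m h : sumD (dirs m) h =
  sumR m (fun l => h (DZ l)) + sumR m (fun b => sumR b (fun a => h (DX a b) + h (DY a b))).
Proof.
  unfold dirs. rewrite sumD_app, sumD_map, sumD_flat. unfold sumR. f_equal.
  f_equal. apply map_ext. intros b. rewrite sumD_flat. f_equal. apply map_ext. intros a. simpl. ring.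
Qed.

Lemma dirs_valid m d : In d (dirs m) -> dvalid m d.
Proof.
  unfold dirs. intros H. apply in_app_or in H. destruct H as [H|H].
  - apply in_map_iff in H. destruct H as (l & <- & Hl). apply in_seq in Hl. simpl; lia.
  - apply in_flat_map in H. destruct H as (b & Hb & H). apply in_seq in Hb.
    apply in_flat_map in H. destruct H as (a & Ha & H). apply in_seq in Ha.
    simpl in H. destruct H as [<-|[<-|[]]]; simpl; lia.
Qed.

Lemma sumR_single m f i : (i < m)%nat -> (forall j, (j < m)%nat -> j <> i -> f j = 0) -> sumR m f = f i.
Proof.
  intros Hi H. induction m. lia. rewrite sumR_S.
  destruct (Nat.eq_dec i m).
  - subst. rewrite sumR_zero. ring. intros j Hj; apply H; lia.
  - rewrite IHm; [|lia|intros; apply H; lia]. rewrite (H m); [ring|lia|auto].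
Qed.

Lemma sumR2_single m f a0 b0 : (a0 < b0 < m)%nat ->
  (forall a b, (a < b < m)%nat -> (a <> a0 \/ b <> b0) -> f a b = 0) ->
  sumR m (fun b => sumR b (fun a => f a b)) = f a0 b0.
Proof.
  intros H0 H. rewrite (sumR_single m _ b0); [|lia|].
  - apply (sumR_single b0 (fun a => f a b0) a0); [lia|]. intros; apply H; lia.
  - intros b Hb Hne. apply sumR_zero. intros a Ha. apply H; lia.
Qed.

Lemma sumR2_zero m f : (forall a b, (a < b < m)%nat -> f a b = 0) ->
  sumR m (fun b => sumR b (fun a => f a b)) = 0.
Proof. intros H. apply sumR_zero. intros b Hb. apply sumR_zero. intros a Ha. apply H; lia. Qed.

Ltac eqbs := repeat match goal with
  | |- context [Nat.eqb ?x ?y] => destruct (Nat.eqb_spec x y)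
  end; simpl; try lia.

Lemma recon_fst m A i j : Herm m A -> (i < m)%nat -> (j < m)%nat ->
  sumD (dirs m) (fun d => dcoord d A * fst (dmat d i j)) = fst (A i j).
Proof.
  intros HA Hi Hj. rewrite sumD_dirs. simpl.
  destruct (lt_eq_lt_dec i j) as [[Hij|Hij]|Hij].
  - rewrite (sumR_zero m (fun l => _)).
    2:{ intros l Hl. unfold Ez. eqbs; ring. }
    rewrite (sumR2_single m _ i j); [|lia|].
    + unfold Ex, Ey. eqbs; ring.
    + intros a b Hab Hne. unfold Ex, Ey. eqbs; ring.
  - subst. rewrite (sumR_single m _ j Hj). 2:{ intros l Hl Hne. unfold Ez. eqbs; ring. }
    rewrite sumR2_zero. unfold Ez; eqbs; ring.
    intros a b Hab. unfold Ex, Ey. eqbs; ring.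
  - rewrite (sumR_zero m (fun l => _)).
    2:{ intros l Hl. unfold Ez. eqbs; ring. }
    rewrite (sumR2_single m _ j i); [|lia|].
    + unfold Ex, Ey. eqbs. rewrite (HA j i) by auto. simpl. ring.
    + intros a b Hab Hne. unfold Ex, Ey. eqbs; ring.
Qed.

Lemma recon_snd m A i j : Herm m A -> (i < m)%nat -> (j < m)%nat ->
  sumD (dirs m) (fun d => dcoord d A * snd (dmat d i j)) = snd (A i j).
Proof.
  intros HA Hi Hj. rewrite sumD_dirs. simpl.
  rewrite (sumR_zero m (fun l => _)).
  2:{ intros l Hl. unfold Ez. eqbs; ring. }
  destruct (lt_eq_lt_dec i j) as [[Hij|Hij]|Hij].
  - rewrite (sumR2_single m _ i j); [|lia|].
    + unfold Ex, Ey. eqbs; ring.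
    + intros a b Hab Hne. unfold Ex, Ey. eqbs; ring.
  - subst. rewrite sumR2_zero. rewrite (herm_diag_real m A j HA Hj); ring.
    intros a b Hab. unfold Ex, Ey. eqbs; ring.
  - rewrite (sumR2_single m _ j i); [|lia|].
    + unfold Ex, Ey. eqbs. rewrite (HA j i) by auto. simpl. ring.
    + intros a b Hab Hne. unfold Ex, Ey. eqbs; ring.
Qed.

Definition wM (M : CMat) (d : dir) : R :=
  match d with DZ l => fst (M l l) | DX a b => 2 * fst (M a b) | DY a b => 2 * snd (M a b) end.

Lemma dF_trace m M X : Herm m M -> Herm m X ->
  sumD (dirs m) (fun d => wM M d * dcoord d X) = fst (mtr m (mmul m M X)).
Proof.
  intros HM HX. rewrite sumD_dirs.
  assert (R : fst (mtr m (mmul m M X)) =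
    sumR m (fun i => sumR m (fun k => fst (M i k) * fst (X k i) - snd (M i k) * snd (X k i)))).
  { unfold mtr, mmul. rewrite fst_Csum. apply sumR_ext. intros. rewrite fst_Csum. reflexivity. }
  rewrite R, sumR_square. simpl. f_equal.
  - apply sumR_ext. intros l Hl. rewrite (herm_diag_real m M l HM Hl). ring.
  - apply sumR_ext. intros b Hb. apply sumR_ext. intros a Ha.
    rewrite (HM a b), (HX a b) by lia. simpl. ring.
Qed.


Definition lim0 (phi : R -> R) (L : R) : Prop :=
  forall eps, 0 < eps -> exists eta, 0 < eta /\
    forall t, t <> 0 -> Rabs t < eta -> Rabs (phi t - L) < eps.

Lemma lim0_plus f g a b : lim0 f a -> lim0 g b -> lim0 (fun t => f t + g t) (a + b).
Proof.
  intros Hf Hg eps He.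
  destruct (Hf (eps/2)) as (e1 & He1 & H1); [lra|].
  destruct (Hg (eps/2)) as (e2 & He2 & H2); [lra|].
  exists (Rmin e1 e2). split. apply Rmin_pos; auto.
  intros t Ht Hlt. pose proof (Rmin_l e1 e2); pose proof (Rmin_r e1 e2).
  specialize (H1 t Ht ltac:(lra)). specialize (H2 t Ht ltac:(lra)).
  replace (f t + g t - (a + b)) with ((f t - a) + (g t - b)) by ring.
  eapply Rle_lt_trans. apply Rabs_triang. lra.
Qed.

Lemma lim0_const c : lim0 (fun _ => c) c.
Proof. intros eps He. exists 1. split. lra. intros. replace (c - c) with 0 by ring. rewrite Rabs_R0; lra. Qed.

Lemma lim0_scal c f a : lim0 f a -> lim0 (fun t => c * f t) (c * a).
Proof.
  intros Hf eps He.
  destruct (Hf (eps / (Rabs c + 1))) as (e1 & He1 & H1).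
  { apply Rdiv_lt_0_compat; auto. pose proof (Rabs_pos c); lra. }
  exists e1. split; auto. intros t Ht Hlt. specialize (H1 t Ht Hlt).
  replace (c * f t - c * a) with (c * (f t - a)) by ring. rewrite Rabs_mult.
  pose proof (Rabs_pos c). pose proof (Rabs_pos (f t - a)).
  apply Rle_lt_trans with (Rabs c * (eps / (Rabs c + 1))).
  apply Rmult_le_compat_l; lra.
  unfold Rdiv. rewrite <- Rmult_assoc. apply Rlt_le_trans with ((Rabs c + 1) * eps * / (Rabs c + 1)).
  apply Rmult_lt_compat_r. apply Rinv_0_lt_compat; lra. nra.
  right. field. lra.
Qed.

Lemma lim0_abs f : lim0 f 0 -> lim0 (fun t => Rabs (f t)) 0.
Proof.
  intros Hf eps He. destruct (Hf eps He) as (e & He' & H). exists e. split; auto.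
  intros t Ht Hlt. specialize (H t Ht Hlt). rewrite Rminus_0_r in *. rewrite Rabs_Rabsolu; auto.
Qed.

Lemma lim0_deriv f l : derivable_pt_lim f 0 l -> lim0 (fun t => (f t - f 0) / t) l.
Proof.
  intros H eps He. destruct (H eps He) as [d Hd]. exists d. split. apply cond_pos.
  intros t Ht Hlt. specialize (Hd t Ht Hlt). rewrite Rplus_0_l in Hd. exact Hd.
Qed.

Lemma lim0_cont f l : derivable_pt_lim f 0 l -> lim0 (fun t => f t - f 0) 0.
Proof.
  intros H eps He. destruct (H 1 ltac:(lra)) as [d Hd].
  exists (Rmin d (eps / (Rabs l + 1))). split.
  { apply Rmin_pos. apply cond_pos. apply Rdiv_lt_0_compat; auto. pose proof (Rabs_pos l); lra. }
  intros t Ht Hlt. pose proof (Rmin_l d (eps / (Rabs l + 1))); pose proof (Rmin_r d (eps / (Rabs l + 1))).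
  specialize (Hd t Ht ltac:(lra)). rewrite Rplus_0_l in Hd. rewrite Rminus_0_r.
  set (q := (f t - f 0) / t) in *.
  assert (E : f t - f 0 = q * t) by (unfold q; field; auto).
  rewrite E, Rabs_mult.
  assert (Rabs q <= Rabs l + 1).
  { replace q with ((q - l) + l) by ring. eapply Rle_trans. apply Rabs_triang. lra. }
  pose proof (Rabs_pos q). pose proof (Rabs_pos t). pose proof (Rabs_pos l).
  apply Rle_lt_trans with ((Rabs l + 1) * Rabs t). apply Rmult_le_compat_r; lra.
  apply Rlt_le_trans with ((Rabs l + 1) * (eps / (Rabs l + 1))).
  apply Rmult_lt_compat_l; lra. right; field; lra.
Qed.

Lemma deriv_shift (psi phi : R -> R) s v :
  derivable_pt_lim psi 0 v -> (forall u, psi u = phi (s + u)) -> derivable_pt_lim phi s v.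
Proof.
  intros H E eps He. destruct (H eps He) as [d Hd]. exists d. intros h Hh Hlt.
  specialize (Hd h Hh Hlt). rewrite !E, Rplus_0_l, Rplus_0_r in Hd. exact Hd.
Qed.

Lemma deriv_ext (f g : R -> R) x v :
  derivable_pt_lim f x v -> (forall u, f u = g u) -> derivable_pt_lim g x v.
Proof.
  intros H E eps He. destruct (H eps He) as [d Hd]. exists d. intros h Hh Hlt.
  specialize (Hd h Hh Hlt). rewrite !E in Hd. exact Hd.
Qed.

Lemma mvt_any (phi phi' : R -> R) (dl : R) :
  (forall s, Rabs s <= Rabs dl -> derivable_pt_lim phi s (phi' s)) ->
  exists xi, Rabs xi <= Rabs dl /\ phi dl - phi 0 = phi' xi * dl.
Proof.
  intros H. destruct (Rtotal_order dl 0) as [Hl|[He|Hg]].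
  - destruct (MVT_cor2 phi phi' dl 0 Hl) as (c & Ec & Hc).
    { intros c Hc. apply H. rewrite !Rabs_left1 by lra. lra. }
    exists c. split. rewrite !Rabs_left1 by lra. lra. rewrite <- (Ropp_involutive (phi dl - phi 0)).
    replace (- (phi dl - phi 0)) with (phi 0 - phi dl) by ring. rewrite Ec. ring.
  - subst. exists 0. split. right; reflexivity. ring.
  - destruct (MVT_cor2 phi phi' 0 dl Hg) as (c & Ec & Hc).
    { intros c Hc. apply H. rewrite !Rabs_right by lra. lra. }
    exists c. split. rewrite !Rabs_right by lra. lra. rewrite Ec. ring.
Qed.


Definition ddelta (rho : CMat) (g : R -> CMat) (d : dir) (t : R) : R := dcoord d (g t) - dcoord d rho.
Definition BaseP (rho : CMat) (g : R -> CMat) (l : list dir) (t : R) : CMat :=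
  fold_right (fun d acc => madd acc (mscale (ddelta rho g d t, 0) (dmat d))) rho l.

Lemma BaseP_fst rho g l t i j :
  fst (BaseP rho g l t i j) = fst (rho i j) + sumD l (fun d => ddelta rho g d t * fst (dmat d i j)).
Proof. induction l; simpl. ring. rewrite IHl. ring. Qed.
Lemma BaseP_snd rho g l t i j :
  snd (BaseP rho g l t i j) = snd (rho i j) + sumD l (fun d => ddelta rho g d t * snd (dmat d i j)).
Proof. induction l; simpl. ring. rewrite IHl. ring. Qed.

Lemma dmat_herm m d : dvalid m d -> Herm m (dmat d).
Proof.
  destruct d; simpl; intros Hv i j Hi Hj; [unfold Ez|unfold Ex|unfold Ey]; eqbs; unfold Cconj, C0; simpl;
  f_equal; ring.
Qed.

Lemma dmat_bound d i j : Rabs (fst (dmat d i j)) <= 1 /\ Rabs (snd (dmat d i j)) <= 1.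
Proof.
  destruct d; simpl; [unfold Ez|unfold Ex|unfold Ey]; eqbs; unfold C0; simpl;
  split; unfold Rabs; repeat destruct Rcase_abs; lra.
Qed.

Lemma BaseP_herm m rho g l t : Herm m rho -> Forall (dvalid m) l -> Herm m (BaseP rho g l t).
Proof.
  intros Hr Hl. induction Hl; simpl; auto.
  apply herm_madd; auto. apply herm_mscale; auto. apply dmat_herm; auto.
Qed.

Lemma sumD_abs_le l (c : dir -> R) (e : dir -> R) :
  (forall d, Rabs (e d) <= 1) -> Rabs (sumD l (fun d => c d * e d)) <= sumD l (fun d => Rabs (c d)).
Proof.
  intros He. induction l; simpl. rewrite Rabs_R0; lra.
  eapply Rle_trans. apply Rabs_triang. rewrite Rabs_mult.
  pose proof (He a). pose proof (Rabs_pos (c a)).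
  assert (Rabs (c a) * Rabs (e a) <= Rabs (c a)) by nra. lra.
Qed.

Lemma sumD_nonneg l (h : dir -> R) : (forall d, 0 <= h d) -> 0 <= sumD l h.
Proof. intros H; induction l; simpl. lra. pose proof (H a); lra. Qed.

Lemma sumR_const m c : sumR m (fun _ => c) = INR m * c.
Proof. induction m. unfold sumR; simpl; ring. rewrite sumR_S, IHm, S_INR. ring. Qed.

Lemma mdist_Base m rho g l t s d :
  mdist m rho (madd (BaseP rho g l t) (mscale (s, 0) (dmat d))) <=
  INR m * (INR m * (2 * (Rabs s + sumD l (fun d' => Rabs (ddelta rho g d' t))))).
Proof.
  unfold mdist. rewrite <- !sumR_const. apply sumR_le; intros i _. apply sumR_le; intros j _.
  unfold madd, mscale, Cadd, Cmul. cbn [fst snd]. rewrite BaseP_fst, BaseP_snd.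
  destruct (dmat_bound d i j) as [B1 B2].
  pose proof (sumD_abs_le l (fun d' => ddelta rho g d' t) (fun d' => fst (dmat d' i j))
    (fun d' => proj1 (dmat_bound d' i j))) as S1.
  pose proof (sumD_abs_le l (fun d' => ddelta rho g d' t) (fun d' => snd (dmat d' i j))
    (fun d' => proj2 (dmat_bound d' i j))) as S2.
  set (A1 := sumD l (fun d' => ddelta rho g d' t * fst (dmat d' i j))) in *.
  set (A2 := sumD l (fun d' => ddelta rho g d' t * snd (dmat d' i j))) in *.
  set (T := sumD l (fun d' => Rabs (ddelta rho g d' t))) in *.
  replace (fst (rho i j) - (fst (rho i j) + A1 + (s * fst (dmat d i j) - 0 * snd (dmat d i j))))
    with (- (A1 + s * fst (dmat d i j))) by ring.
  replace (snd (rho i j) - (snd (rho i j) + A2 + (s * snd (dmat d i j) + 0 * fst (dmat d i j))))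
    with (- (A2 + s * snd (dmat d i j))) by ring.
  rewrite !Rabs_Ropp.
  pose proof (Rabs_triang A1 (s * fst (dmat d i j))).
  pose proof (Rabs_triang A2 (s * snd (dmat d i j))).
  rewrite Rabs_mult in *. pose proof (Rabs_pos s).
  assert (Rabs s * Rabs (fst (dmat d i j)) <= Rabs s) by nra.
  assert (Rabs s * Rabs (snd (dmat d i j)) <= Rabs s) by nra.
  lra.
Qed.

Lemma dcoord_diff d A B : dcoord d (madd A (mscale (-1, 0) B)) = dcoord d A - dcoord d B.
Proof. destruct d; simpl; ring. Qed.

Lemma sumD_ext l h1 h2 : (forall d, h1 d = h2 d) -> sumD l h1 = sumD l h2.
Proof. intros H; induction l; simpl; auto. rewrite H, IHl; auto. Qed.

Lemma BaseP_full m rho g t : Herm m rho -> Herm m (g t) -> meq m (BaseP rho g (dirs m) t) (g t).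
Proof.
  intros Hr Hg i j Hi Hj.
  set (D := madd (g t) (mscale (-1, 0) rho)).
  assert (HD : Herm m D) by (apply herm_madd; auto; apply herm_mscale; simpl; auto).
  assert (E : forall d, ddelta rho g d t = dcoord d D) by (intros; unfold D; rewrite dcoord_diff; reflexivity).
  apply Ceq.
  - rewrite BaseP_fst. rewrite (sumD_ext _ _ (fun d => dcoord d D * fst (dmat d i j))) by (intros; rewrite E; auto).
    rewrite recon_fst by auto. unfold D, madd, mscale, Cadd, Cmul; simpl. ring.
  - rewrite BaseP_snd. rewrite (sumD_ext _ _ (fun d => dcoord d D * snd (dmat d i j))) by (intros; rewrite E; auto).
    rewrite recon_snd by auto. unfold D, madd, mscale, Cadd, Cmul; simpl. ring.
Qed.


Lemma prod_est a b w c e1 e2 eps : 0 < eps ->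
  Rabs (a - w) < e1 -> Rabs (b - c) < e2 -> e2 <= 1 ->
  e2 <= eps / (2 * (Rabs w + 1)) -> e1 = eps / (2 * (Rabs c + 1)) ->
  Rabs (a * b - w * c) < eps.
Proof.
  intros He H1 H2 H3 H4 H5.
  replace (a * b - w * c) with ((a - w) * b + w * (b - c)) by ring.
  eapply Rle_lt_trans. apply Rabs_triang. rewrite !Rabs_mult.
  pose proof (Rabs_pos w). pose proof (Rabs_pos c). pose proof (Rabs_pos (a - w)).
  pose proof (Rabs_pos b). pose proof (Rabs_pos (b - c)).
  assert (Hb : Rabs b <= Rabs c + 1).
  { replace b with ((b - c) + c) by ring. eapply Rle_trans. apply Rabs_triang. lra. }
  assert (T1 : Rabs (a - w) * Rabs b <= e1 * (Rabs c + 1)) by nra.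
  assert (E1 : e1 * (Rabs c + 1) = eps / 2) by (rewrite H5; field; lra).
  assert (T2 : Rabs w * Rabs (b - c) <= Rabs w * e2) by nra.
  assert (T3 : Rabs w * e2 <= Rabs w * (eps / (2 * (Rabs w + 1)))) by nra.
  assert (E3 : Rabs w * (eps / (2 * (Rabs w + 1))) < eps / 2).
  { apply Rmult_lt_reg_r with (2 * (Rabs w + 1)). lra.
    replace (Rabs w * (eps / (2 * (Rabs w + 1))) * (2 * (Rabs w + 1))) with (Rabs w * eps) by (field; lra).
    replace (eps / 2 * (2 * (Rabs w + 1))) with (eps * Rabs w + eps) by (field; lra). nra. }
  lra.
Qed.

Lemma lim0_ext f g L : (forall t, f t = g t) -> lim0 f L -> lim0 g L.
Proof. intros E H eps He. destruct (H eps He) as (e & He' & Hh). exists e. split; auto. intros; rewrite <- E; auto. Qed.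

Section Chain.
Variables (m : nat) (U : CMat -> Prop) (F : CMat -> R) (rho : CMat) (g : R -> CMat) (X : CMat).
Hypothesis HU : OpenHerm m U.
Hypothesis HFext : forall A B, meq m A B -> F A = F B.
Hypothesis HF1 : CkOn m U 1 F.
Hypothesis Hrho : U rho.
Hypothesis Hrh : Herm m rho.
Hypothesis Hg0 : meq m (g 0) rho.
Hypothesis Hgd : forall i j, (i < m)%nat -> (j < m)%nat ->
     derivable_pt_lim (fun t => fst (g t i j)) 0 (fst (X i j)) /\
     derivable_pt_lim (fun t => snd (g t i j)) 0 (snd (X i j)).

Lemma coord_deriv d : dvalid m d -> derivable_pt_lim (fun t => dcoord d (g t)) 0 (dcoord d X).
Proof.
  destruct d; simpl; intros Hv.
  - apply (Hgd l l); auto.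
  - apply (Hgd a b); lia.
  - apply (Hgd a b); lia.
Qed.

Lemma coord_0 d : dvalid m d -> dcoord d (g 0) = dcoord d rho.
Proof. destruct d; simpl; intros Hv; rewrite Hg0; auto; lia. Qed.

Lemma delta_quot d : dvalid m d -> lim0 (fun t => ddelta rho g d t / t) (dcoord d X).
Proof.
  intros Hv. eapply lim0_ext. 2: apply lim0_deriv, coord_deriv, Hv.
  intros t; simpl. unfold ddelta. rewrite coord_0; auto.
Qed.

Lemma delta_small d : dvalid m d -> lim0 (fun t => ddelta rho g d t) 0.
Proof.
  intros Hv. eapply lim0_ext. 2: apply (lim0_cont _ _ (coord_deriv d Hv)).
  intros t; simpl. unfold ddelta. rewrite coord_0; auto.
Qed.

Lemma sum_small l : Forall (dvalid m) l -> lim0 (fun t => sumD l (fun d => Rabs (ddelta rho g d t))) 0.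
Proof.
  intros Hl. induction Hl; simpl.
  - apply lim0_const.
  - replace 0 with (0 + 0) by ring. apply lim0_plus; auto. apply lim0_abs, delta_small; auto.
Qed.

Lemma dvalid_Dir d : dvalid m d -> Dir m (dmat d).
Proof.
  destruct d; simpl; intros Hv.
  - right. exists l. auto.
  - left. exists a, b. split; [lia|]. split; [lia|]. auto.
  - left. exists a, b. split; [lia|]. split; [lia|]. auto.
Qed.

Lemma term_lim d l w : dvalid m d -> Forall (dvalid m) l -> PDeriv F rho (dmat d) w ->
  lim0 (fun t => (F (madd (BaseP rho g l t) (mscale (ddelta rho g d t, 0) (dmat d))) - F (BaseP rho g l t)) / t)
       (w * dcoord d X).
Proof.
  intros Hv Hl Hw.
  destruct HF1 as [_ HP]. destruct (HP (dmat d) (dvalid_Dir d Hv)) as (pd & Hpd & Hcont).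
  simpl in Hcont.
  assert (Hpw : pd rho = w) by (eapply PDeriv_uniq; [apply Hpd; auto | exact Hw]).
  set (c := dcoord d X).
  intros eps He.
  set (e1 := eps / (2 * (Rabs c + 1))).
  assert (He1 : 0 < e1) by (unfold e1; apply Rdiv_lt_0_compat; [lra|]; pose proof (Rabs_pos c); lra).
  set (e2 := Rmin 1 (eps / (2 * (Rabs w + 1)))).
  assert (He2 : 0 < e2).
  { unfold e2; apply Rmin_pos; [lra|]. apply Rdiv_lt_0_compat; [lra|]; pose proof (Rabs_pos w); lra. }
  destruct (Hcont rho Hrho e1 He1) as (d1 & Hd1 & Hc1).
  destruct HU as [HUh HUo]. destruct (HUo rho Hrho) as (r0 & Hr0 & Hr0U).
  destruct (delta_quot d Hv e2 He2) as (eta2 & Heta2 & Hq).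
  assert (Hs : lim0 (fun t => INR m * (INR m * (2 * (Rabs (ddelta rho g d t) + sumD l (fun d' => Rabs (ddelta rho g d' t)))))) 0).
  { replace 0 with (INR m * (INR m * (2 * (0 + 0)))) by ring.
    apply lim0_scal, lim0_scal, lim0_scal, lim0_plus. apply lim0_abs, delta_small; auto. apply sum_small; auto. }
  destruct (Hs (Rmin d1 r0) (Rmin_pos _ _ Hd1 Hr0)) as (eta3 & Heta3 & Hsm).
  exists (Rmin eta2 eta3). split. apply Rmin_pos; auto.
  intros t Ht Hlt. pose proof (Rmin_l eta2 eta3); pose proof (Rmin_r eta2 eta3).
  specialize (Hq t Ht ltac:(lra)). specialize (Hsm t Ht ltac:(lra)).
  rewrite Rminus_0_r in Hsm.
  pose proof (Rmin_l d1 r0); pose proof (Rmin_r d1 r0).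
  set (B := BaseP rho g l t) in *.
  set (dl := ddelta rho g d t) in *.
  set (phi := fun s => F (madd B (mscale (s, 0) (dmat d)))).
  assert (Hnear : forall s, Rabs s <= Rabs dl ->
     U (madd B (mscale (s, 0) (dmat d))) /\ mdist m rho (madd B (mscale (s, 0) (dmat d))) < d1).
  { intros s Hs'. pose proof (mdist_Base m rho g l t s d) as Md. fold B in Md.
    assert (Mle : INR m * (INR m * (2 * (Rabs s + sumD l (fun d' => Rabs (ddelta rho g d' t))))) <=
                  INR m * (INR m * (2 * (Rabs dl + sumD l (fun d' => Rabs (ddelta rho g d' t)))))).
    { pose proof (pos_INR m). apply Rmult_le_compat_l; auto. apply Rmult_le_compat_l; auto. lra. }
    pose proof (Rle_abs (INR m * (INR m * (2 * (Rabs dl + sumD l (fun d' => Rabs (ddelta rho g d' t))))))).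
    split.
    - apply Hr0U. apply herm_madd. apply BaseP_herm; auto. apply herm_mscale; auto. apply dmat_herm; auto.
      lra.
    - lra. }
  assert (Hder : forall s, Rabs s <= Rabs dl -> derivable_pt_lim phi s (pd (madd B (mscale (s, 0) (dmat d))))).
  { intros s Hs'. destruct (Hnear s Hs') as [HUs _].
    eapply deriv_shift. apply (Hpd _ HUs).
    intros u. unfold phi. apply HFext. intros i j _ _. unfold madd, mscale. csolve. }
  destruct (mvt_any phi (fun s => pd (madd B (mscale (s, 0) (dmat d)))) dl Hder) as (xi & Hxi & Emvt).
  assert (Phi0 : phi 0 = F B) by (unfold phi; apply HFext; intros i j _ _; unfold madd, mscale; csolve).
  change (F (madd B (mscale (dl, 0) (dmat d)))) with (phi dl).
  rewrite <- Phi0, Emvt.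
  replace (pd (madd B (mscale (xi, 0) (dmat d))) * dl / t) with
    (pd (madd B (mscale (xi, 0) (dmat d))) * (dl / t)) by (field; auto).
  destruct (Hnear xi Hxi) as [HUx Hdx].
  specialize (Hc1 _ HUx Hdx). rewrite Hpw in Hc1.
  apply (prod_est _ _ _ _ e1 e2 eps); auto.
  - unfold e2; apply Rmin_l.
  - unfold e2; apply Rmin_r.
Qed.

Fixpoint tele (l : list dir) (t : R) : R :=
  match l with
  | [] => 0
  | d :: l' => (F (madd (BaseP rho g l' t) (mscale (ddelta rho g d t, 0) (dmat d))) - F (BaseP rho g l' t)) + tele l' t
  end.

Lemma tele_eq l t : tele l t = F (BaseP rho g l t) - F rho.
Proof. induction l; simpl. ring. rewrite IHl. ring. Qed.

Lemma tele_lim l (w : dir -> R) : Forall (dvalid m) l -> (forall d, dvalid m d -> PDeriv F rho (dmat d) (w d)) ->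
  lim0 (fun t => tele l t / t) (sumD l (fun d => w d * dcoord d X)).
Proof.
  intros Hl Hw. induction Hl; simpl.
  - eapply lim0_ext. 2: apply lim0_const. intros t; simpl. unfold Rdiv; ring.
  - eapply lim0_ext. 2: apply lim0_plus; [apply (term_lim x l (w x)); auto | apply IHHl].
    intros t; simpl. unfold Rdiv; ring.
Qed.

Lemma chain_rule (w : dir -> R) :
  (exists eps, 0 < eps /\ forall t, Rabs t < eps -> Herm m (g t)) ->
  (forall d, dvalid m d -> PDeriv F rho (dmat d) (w d)) ->
  derivable_pt_lim (fun t => F (g t)) 0 (sumD (dirs m) (fun d => w d * dcoord d X)).
Proof.
  intros (e0 & He0 & Hgh) Hw.
  assert (Hall : Forall (dvalid m) (dirs m)) by (apply Forall_forall; intros; apply dirs_valid; auto).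
  pose proof (tele_lim (dirs m) w Hall Hw) as HL.
  intros eps He. destruct (HL eps He) as (e & Hepos & H).
  assert (Hmin : 0 < Rmin e e0) by (apply Rmin_pos; auto).
  exists (mkposreal _ Hmin). intros h Hh Hlt. simpl in Hlt.
  pose proof (Rmin_l e e0); pose proof (Rmin_r e e0).
  specialize (H h Hh ltac:(lra)).
  rewrite tele_eq in H.
  rewrite Rplus_0_l.
  rewrite (HFext (g 0) rho Hg0).
  rewrite <- (HFext _ _ (BaseP_full m rho g h Hrh (Hgh h ltac:(lra)))). exact H.
Qed.
End Chain.


Lemma wM_PDeriv m F rho M d : IsMF m F rho M -> dvalid m d -> PDeriv F rho (dmat d) (wM M d).
Proof.
  intros H Hv. destruct d; simpl in *.
  - destruct (H l l Hv Hv) as [_ [_ H3]]. destruct (H3 eq_refl) as (dz & P & E).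
    rewrite E; simpl; auto.
  - destruct (H a b ltac:(lia) ltac:(lia)) as [H1 _]. destruct (H1 ltac:(lia)) as (dx & dy & Px & Py & E).
    rewrite E; simpl. replace (2 * (dx / 2)) with dx by field. auto.
  - destruct (H a b ltac:(lia) ltac:(lia)) as [H1 _]. destruct (H1 ltac:(lia)) as (dx & dy & Px & Py & E).
    rewrite E; simpl. replace (2 * (dy / 2)) with dy by field. auto.
Qed.

Lemma part1 m U F (HU : OpenHerm m U) (HPU : forall p, Pdot m p -> U p)
  (HFext : forall A B, meq m A B -> F A = F B) (HF : SmoothOn m U F) :
  forall rho M, Pdot m rho -> IsMF m F rho M -> IsGrad m F rho (gradFormula m rho M).
Proof.
  intros rho M Hp HM. split. eapply tangent_grad; eauto.
  intros X [HXh HXt] L L' HL HL' g [[e0 [He0 Hcurve]] [Hg0 Hgd]].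
  rewrite (grad_value m rho M X L L' HXt HL HL').
  rewrite <- dF_trace by (auto; eapply IsMF_herm; eauto).
  pose proof (HPU rho Hp) as HUr. destruct Hp as [Hrh _].
  apply (chain_rule m U F rho g X HU HFext (HF 1%nat) HUr Hrh Hg0 Hgd).
  - exists e0. split; auto. intros t Ht. destruct (Hcurve t Ht) as [Hh _]; exact Hh.
  - intros d Hv. eapply wM_PDeriv; eauto.
Qed.


Definition qf (m : nat) (A : CMat) (v : nat -> Cx) : Cx :=
  Csum m (fun i => Csum m (fun j => Cmul (Cconj (v i)) (Cmul (A i j) (v j)))).

Definition ctr (L : CMat) : CMat := fun i j => Cconj (L j i).

Lemma qf_nonneg m A v : PosDef m A -> 0 <= fst (qf m A v).
Proof.
  intros H. destruct (classic (exists i, (i < m)%nat /\ v i <> C0)) as [Ex|NEx].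
  - left. apply (H v Ex).
  - right. symmetry. unfold qf. rewrite Csum_zero; [reflexivity|].
    intros i Hi. apply Csum_zero. intros j Hj.
    assert (v i = C0) by (apply NNPP; intros Hn; apply NEx; eauto).
    rewrite H0. unfold Cconj, Cmul, C0; simpl. apply Ceq; simpl; ring.
Qed.

Lemma qf_zero m A v : PosDef m A -> fst (qf m A v) = 0 -> forall i, (i < m)%nat -> v i = C0.
Proof.
  intros H Hz i Hi. apply NNPP; intros Hn.
  pose proof (H v (ex_intro _ i (conj Hi Hn))). unfold qf in Hz. lra.
Qed.

Lemma tr_col m A L : mtr m (mmul m (ctr L) (mmul m A L)) = Csum m (fun j => qf m A (fun i => L i j)).
Proof.
  unfold mtr, mmul, qf, ctr. apply Csum_ext. intros j Hj. apply Csum_ext. intros i Hi.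
  rewrite Csum_mul_l. reflexivity.
Qed.

Lemma tr_row m A L : mtr m (mmul m (ctr L) (mmul m L A)) = Csum m (fun i => qf m A (fun k => Cconj (L i k))).
Proof.
  unfold mtr, mmul, qf, ctr.
  rewrite (Csum_ext m _ (fun j => Csum m (fun i => Csum m (fun k => Cmul (Cconj (L i j)) (Cmul (L i k) (A k j))))))
    by (intros; apply Csum_ext; intros; apply Csum_mul_l).
  rewrite Csum_swap. apply Csum_ext. intros i Hi.
  rewrite Csum_swap. apply Csum_ext. intros k Hk. apply Csum_ext. intros j Hj.
  rewrite Cconj_conj. csolve.
Qed.

Lemma sum_qf_nonneg m A f : PosDef m A -> 0 <= fst (Csum m (fun j => qf m A (f j))).
Proof. intros H. rewrite fst_Csum. apply sumR_nonneg. intros; apply qf_nonneg; auto. Qed.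

Lemma sum_qf_zero m A f : PosDef m A -> fst (Csum m (fun j => qf m A (f j))) = 0 ->
  forall j i, (j < m)%nat -> (i < m)%nat -> f j i = C0.
Proof.
  intros H Hz j i Hj Hi. rewrite fst_Csum in Hz.
  apply (qf_zero m A (f j) H); auto.
  apply (sumR_nonneg_zero m (fun j => fst (qf m A (f j)))); auto.
  intros; apply qf_nonneg; auto.
Qed.

Definition zeroM : CMat := fun _ _ => C0.

Lemma sld_inj m rho L : PosDef m rho ->
  meq m (madd (mmul m rho L) (mmul m L rho)) zeroM -> meq m L zeroM.
Proof.
  intros Hp Hz.
  assert (T : mtr m (mmul m (ctr L) (madd (mmul m rho L) (mmul m L rho))) = C0).
  { rewrite (mtr_ext m _ (mmul m (ctr L) zeroM)) by (apply mmul_ext; [apply meq_refl|exact Hz]).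
    unfold mtr. apply Csum_zero. intros i Hi. unfold mmul. apply Csum_zero. intros.
    unfold zeroM. csolve. }
  rewrite mtr_mmul_madd_r, tr_col, tr_row in T.
  assert (T1 : fst (Cadd (Csum m (fun j => qf m rho (fun i => L i j)))
                         (Csum m (fun i => qf m rho (fun k => Cconj (L i k))))) = 0) by (rewrite T; reflexivity).
  unfold Cadd in T1; simpl in T1.
  pose proof (sum_qf_nonneg m rho (fun j i => L i j) Hp).
  pose proof (sum_qf_nonneg m rho (fun i k => Cconj (L i k)) Hp).
  intros i j Hi Hj. unfold zeroM.
  apply (sum_qf_zero m rho (fun j i => L i j) Hp); auto. lra.
Qed.


Section Enc.
Variable m : nat.
Variable rho : CMat.

Definition dec (x : nat -> R) : CMat := fun i j => (x (2 * (i * m + j))%nat, x (2 * (i * m + j) + 1)%nat).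
Definition enc (A : CMat) (k : nat) : R :=
  if Nat.even k then fst (A (k / 2 / m)%nat (k / 2 mod m)%nat) else snd (A (k / 2 / m)%nat (k / 2 mod m)%nat).
Definition Phi (A : CMat) : CMat := mscale (1/2, 0) (madd (mmul m rho A) (mmul m A rho)).

Lemma Phi_pt A B : (forall i j, A i j = B i j) -> forall i j, Phi A i j = Phi B i j.
Proof.
  intros H i j. unfold Phi, mscale, madd, mmul. f_equal. f_equal; apply Csum_ext; intros; rewrite !H; auto.
Qed.

Lemma Phi_unf A i j : Phi A i j = Cmul (1/2, 0) (Cadd (mmul m rho A i j) (mmul m A rho i j)).
Proof. reflexivity. Qed.

Lemma Phi_add A B i j : Phi (madd A B) i j = Cadd (Phi A i j) (Phi B i j).
Proof. rewrite !Phi_unf, mmul_madd_r, mmul_madd_l. csolve. Qed.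

Lemma Phi_scal c A i j : Phi (mscale (c, 0) A) i j = mscale (c, 0) (Phi A) i j.
Proof. unfold mscale at 2. rewrite !Phi_unf, mmul_mscale_r, mmul_mscale_l. csolve. Qed.

Lemma enc_pt A B k : (forall i j, A i j = B i j) -> enc A k = enc B k.
Proof. intros H; unfold enc; rewrite !H; auto. Qed.

Definition fmap (x : nat -> R) (k : nat) : R :=
  if Nat.ltb k (2 * (m * m)) then enc (Phi (dec x)) k else 0.

Lemma fmap_add x y k : fmap (fun i => x i + y i) k = fmap x k + fmap y k.
Proof.
  unfold fmap. destruct (Nat.ltb k (2 * (m * m))); [|ring].
  rewrite (enc_pt _ (fun i j => Cadd (Phi (dec x) i j) (Phi (dec y) i j))).
  - unfold enc. destruct (Nat.even k); reflexivity.
  - intros i j. rewrite <- Phi_add. apply Phi_pt. intros; reflexivity.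
Qed.

Lemma fmap_scal c x k : fmap (fun i => c * x i) k = c * fmap x k.
Proof.
  unfold fmap. destruct (Nat.ltb k (2 * (m * m))); [|ring].
  rewrite (enc_pt _ (mscale (c, 0) (Phi (dec x)))).
  - unfold enc, mscale, Cmul. destruct (Nat.even k); simpl; ring.
  - intros i j. rewrite <- Phi_scal. apply Phi_pt. intros. unfold dec, mscale, Cmul. apply Ceq; simpl; ring.
Qed.

Hypothesis Hm : (0 < m)%nat.

Lemma idx_bound k : (k < 2 * (m * m))%nat -> (k / 2 / m < m)%nat /\ (k / 2 mod m < m)%nat.
Proof.
  intros H. split.
  - apply Nat.Div0.div_lt_upper_bound. apply Nat.Div0.div_lt_upper_bound. lia.
  - apply Nat.mod_upper_bound; lia.
Qed.

Lemma dec_idx i j : (i < m)%nat -> (j < m)%nat -> (2 * (i * m + j) + 1 < 2 * (m * m))%nat.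
Proof. intros; nia. Qed.

Lemma Phi_meq A B : meq m A B -> forall i j, (i < m)%nat -> (j < m)%nat -> Phi A i j = Phi B i j.
Proof.
  intros H i j Hi Hj. rewrite !Phi_unf.
  rewrite (mmul_ext m rho rho A B (meq_refl _ _) H i j Hi Hj).
  rewrite (mmul_ext m A B rho rho H (meq_refl _ _) i j Hi Hj). reflexivity.
Qed.

Lemma fmap_loc x y : (forall i, lt i (2 * (m * m)) -> x i = y i) -> forall k, fmap x k = fmap y k.
Proof.
  intros H k. unfold fmap. destruct (Nat.ltb_spec k (2 * (m * m))); auto.
  destruct (idx_bound k H0) as [H1 H2].
  assert (E : meq m (dec x) (dec y)).
  { intros i j Hi Hj. pose proof (dec_idx i j Hi Hj). unfold dec. rewrite !H by lia. reflexivity. }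
  unfold enc. rewrite (Phi_meq _ _ E) by auto. reflexivity.
Qed.

Lemma idx_div i j : (i < m)%nat -> (j < m)%nat ->
  ((i * m + j) / m = i)%nat /\ ((i * m + j) mod m = j)%nat.
Proof.
  intros Hi Hj. split.
  - symmetry. apply (Nat.div_unique _ _ _ j); lia.
  - symmetry. apply (Nat.mod_unique _ _ i); lia.
Qed.

Lemma enc_even A i j : (i < m)%nat -> (j < m)%nat -> enc A (2 * (i * m + j)) = fst (A i j).
Proof.
  intros Hi Hj. unfold enc. rewrite Nat.even_even.
  replace (2 * (i * m + j) / 2)%nat with (i * m + j)%nat.
  2:{ apply (Nat.div_unique _ _ _ 0); lia. }
  destruct (idx_div i j Hi Hj) as [-> ->]. reflexivity.
Qed.

Lemma enc_odd A i j : (i < m)%nat -> (j < m)%nat -> enc A (2 * (i * m + j) + 1) = snd (A i j).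
Proof.
  intros Hi Hj. unfold enc. rewrite Nat.even_odd.
  replace ((2 * (i * m + j) + 1) / 2)%nat with (i * m + j)%nat.
  2:{ apply (Nat.div_unique _ _ _ 1); lia. }
  destruct (idx_div i j Hi Hj) as [-> ->]. reflexivity.
Qed.

Lemma fmap_inj (Hpd : PosDef m rho) x :
  (forall k, lt k (2 * (m * m)) -> fmap x k = 0) -> forall i, lt i (2 * (m * m)) -> x i = 0.
Proof.
  intros H i Hi.
  assert (HP : forall a b, (a < m)%nat -> (b < m)%nat -> Phi (dec x) a b = C0).
  { intros a b Ha Hb. pose proof (dec_idx a b Ha Hb).
    pose proof (H (2 * (a * m + b))%nat ltac:(lia)) as E1.
    pose proof (H (2 * (a * m + b) + 1)%nat ltac:(lia)) as E2.
    unfold fmap in E1, E2.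
    destruct (Nat.ltb_spec (2 * (a * m + b)) (2 * (m * m))); [|lia].
    destruct (Nat.ltb_spec (2 * (a * m + b) + 1) (2 * (m * m))); [|lia].
    rewrite enc_even in E1 by auto. rewrite enc_odd in E2 by auto.
    apply Ceq; auto. }
  assert (HZ : meq m (dec x) zeroM).
  { apply (sld_inj m rho); auto. intros a b Ha Hb. pose proof (HP a b Ha Hb) as E.
    rewrite Phi_unf in E. unfold madd, zeroM. unfold Cmul, Cadd, C0 in *.
    injection E; intros E2 E1. apply Ceq; simpl; lra. }
  destruct (idx_bound i Hi) as [Ha Hb].
  pose proof (HZ _ _ Ha Hb) as Z. unfold dec, zeroM, C0 in Z. cbv beta in Z. pose proof (f_equal fst Z) as Z1; pose proof (f_equal snd Z) as Z2; cbn [fst snd] in Z1, Z2.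
  pose proof (Nat.div_mod (i / 2) m ltac:(lia)) as D1.
  pose proof (Nat.div_mod i 2 ltac:(lia)) as D2.
  pose proof (Nat.mod_upper_bound i 2 ltac:(lia)) as D3.
  assert (E : (i / 2 / m * m + i / 2 mod m = i / 2)%nat) by lia.
  rewrite E in Z1, Z2.
  assert (Ei : i = (2 * (i / 2))%nat \/ i = (2 * (i / 2) + 1)%nat) by lia.
  destruct Ei as [Ei|Ei]; rewrite Ei at 1; auto.
Qed.
End Enc.

Lemma sld_exists m rho Y : PosDef m rho -> exists L, IsSLD m rho Y L.
Proof.
  intros Hpd. destruct (Nat.eq_dec m 0) as [E|Hm].
  - exists Y. intros i j Hi. lia.
  - assert (Hm' : (0 < m)%nat) by lia.
    destruct (LA.lin_surj (2 * (m * m)) (fmap m rho) (fmap_add m rho) (fmap_scal m rho)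
      (fmap_loc m rho Hm') (fmap_inj m rho Hm' Hpd) (enc m Y)) as [x Hx].
    exists (dec m x). intros i j Hi Hj. pose proof (dec_idx m Hm' i j Hi Hj).
    pose proof (Hx (2 * (i * m + j))%nat ltac:(lia)) as E1.
    pose proof (Hx (2 * (i * m + j) + 1)%nat ltac:(lia)) as E2.
    unfold fmap in E1, E2.
    destruct (Nat.ltb_spec (2 * (i * m + j)) (2 * (m * m))); [|lia].
    destruct (Nat.ltb_spec (2 * (i * m + j) + 1) (2 * (m * m))); [|lia].
    rewrite (enc_even m Hm') in E1 by auto. rewrite (enc_even m Hm') in E1 by auto.
    rewrite (enc_odd m Hm') in E2 by auto. rewrite (enc_odd m Hm') in E2 by auto.
    apply Ceq; auto.
Qed.


#[export] Instance Csum_proper : Proper (eq ==> pointwise_relation nat eq ==> eq) Csum.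
Proof. intros m m' <- f g H. apply Csum_ext. intros; apply H. Qed.

Definition matvec m (K : CMat) (v : nat -> Cx) := fun k => Csum m (fun l => Cmul (K k l) (v l)).
Definition Bf m (A : CMat) (u v : nat -> Cx) : Cx :=
  Csum m (fun i => Csum m (fun j => Cmul (Cconj (u i)) (Cmul (A i j) (v j)))).

Lemma B_mmul_r m A K u v : Bf m (mmul m A K) u v = Bf m A u (matvec m K v).
Proof.
  unfold Bf, mmul, matvec.
  setoid_rewrite Csum_mul_r. setoid_rewrite Csum_mul_l. setoid_rewrite Csum_mul_l.
  apply Csum_ext; intros i _. rewrite Csum_swap. apply Csum_ext; intros; apply Csum_ext; intros.
  rewrite !Cmul_assoc. reflexivity.
Qed.

Lemma B_mmul_l m A K u v : Herm m K -> Bf m (mmul m K A) u v = Bf m A (matvec m K u) v.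
Proof.
  intros HK. unfold Bf, mmul, matvec.
  setoid_rewrite Csum_mul_r. setoid_rewrite Csum_mul_l. setoid_rewrite Cconj_Csum.
  setoid_rewrite Csum_mul_r.
  (* LHS: i j k ; RHS: k j i *)
  rewrite (Csum_ext m (fun i => Csum m (fun j => Csum m (fun k => _))) (fun i => Csum m (fun k => Csum m (fun j =>
     Cmul (Cconj (u i)) (Cmul (Cmul (K i k) (A k j)) (v j)))))).
  2:{ intros i _. apply Csum_swap. }
  rewrite Csum_swap.
  apply Csum_ext; intros k Hk. rewrite Csum_swap. apply Csum_ext; intros i Hi. apply Csum_ext; intros j Hj.
  rewrite Cconj_mul, HK by auto. csolve.
Qed.

Lemma B_expand m A v u a :
  Bf m A (fun i => Cadd (v i) (Cmul (a, 0) (u i))) (fun i => Cadd (v i) (Cmul (a, 0) (u i))) =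
  Cadd (Cadd (Bf m A v v) (Cmul (a, 0) (Cadd (Bf m A v u) (Bf m A u v)))) (Cmul (a * a, 0) (Bf m A u u)).
Proof.
  unfold Bf. rewrite Cmul_add_r, !Csum_mul_l, <- !Csum_plus.
  apply Csum_ext; intros i _. rewrite !Csum_mul_l, <- !Csum_plus.
  apply Csum_ext; intros j _. csolve.
Qed.

Lemma B_madd m A A' u v : Bf m (madd A A') u v = Cadd (Bf m A u v) (Bf m A' u v).
Proof.
  unfold Bf. rewrite <- Csum_plus. apply Csum_ext; intros i _. rewrite <- Csum_plus.
  apply Csum_ext; intros j _. unfold madd. csolve.
Qed.

Lemma B_mscale m c A u v : Bf m (mscale c A) u v = Cmul c (Bf m A u v).
Proof.
  unfold Bf. rewrite Csum_mul_l. apply Csum_ext; intros i _. rewrite Csum_mul_l.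
  apply Csum_ext; intros j _. unfold mscale. csolve.
Qed.

Lemma B_meq m A A' u v : meq m A A' -> Bf m A u v = Bf m A' u v.
Proof. intros H. unfold Bf. apply Csum_ext; intros i Hi; apply Csum_ext; intros j Hj. rewrite H; auto. Qed.


Definition n1 (z : Cx) : R := Rabs (fst z) + Rabs (snd z).

Lemma n1_pos z : 0 <= n1 z.
Proof. unfold n1; pose proof (Rabs_pos (fst z)); pose proof (Rabs_pos (snd z)); lra. Qed.

Lemma n1_add a b : n1 (Cadd a b) <= n1 a + n1 b.
Proof. unfold n1, Cadd; simpl. pose proof (Rabs_triang (fst a) (fst b)); pose proof (Rabs_triang (snd a) (snd b)); lra. Qed.

Lemma n1_mul a b : n1 (Cmul a b) <= n1 a * n1 b.
Proof.
  unfold n1, Cmul; simpl.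
  pose proof (Rabs_triang (fst a * fst b) (- (snd a * snd b))).
  pose proof (Rabs_triang (fst a * snd b) (snd a * fst b)).
  rewrite Rabs_Ropp, !Rabs_mult in *. unfold Rminus.
  pose proof (Rabs_pos (fst a)); pose proof (Rabs_pos (snd a)); pose proof (Rabs_pos (fst b)); pose proof (Rabs_pos (snd b)).
  nra.
Qed.

Lemma n1_Csum m f : n1 (Csum m f) <= sumR m (fun i => n1 (f i)).
Proof.
  induction m. unfold Csum, sumR, n1; simpl. rewrite Rabs_R0. lra.
  rewrite Csum_S, sumR_S. eapply Rle_trans. apply n1_add. lra.
Qed.

Lemma n1_zero z : n1 z = 0 -> z = C0.
Proof.
  unfold n1. intros H. pose proof (Rabs_pos (fst z)); pose proof (Rabs_pos (snd z)).
  revert H. unfold Rabs. destruct Rcase_abs; destruct Rcase_abs; intros; apply Ceq; simpl; lra.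
Qed.

Lemma sumR_single_le m f i : (forall j, (j < m)%nat -> 0 <= f j) -> (i < m)%nat -> f i <= sumR m f.
Proof.
  intros H Hi. induction m. lia. rewrite sumR_S.
  destruct (Nat.eq_dec i m). subst. pose proof (sumR_nonneg m f ltac:(intros; apply H; lia)). lra.
  assert (f i <= sumR m f) by (apply IHm; [intros; apply H; lia | lia]). pose proof (H m ltac:(lia)). lra.
Qed.

Lemma congr_nonzero m K v a :
  (exists i, (i < m)%nat /\ v i <> C0) ->
  Rabs a * (INR m * sumR m (fun i => sumR m (fun k => n1 (K i k)))) < 1 ->
  exists i, (i < m)%nat /\ Cadd (v i) (Cmul (a, 0) (matvec m K v i)) <> C0.
Proof.
  intros [i0 [Hi0 Hv0]] Ha. apply NNPP. intros Hn.
  assert (Hz : forall i, (i < m)%nat -> Cadd (v i) (Cmul (a, 0) (matvec m K v i)) = C0).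
  { intros i Hi. apply NNPP. intros Hne. apply Hn. eauto. }
  set (CK := sumR m (fun i => sumR m (fun k => n1 (K i k)))) in *.
  set (nv := sumR m (fun i => n1 (v i))).
  assert (Hbound : forall i, (i < m)%nat -> n1 (v i) <= Rabs a * (CK * nv)).
  { intros i Hi. pose proof (Hz i Hi) as E.
    assert (Ev : v i = Copp (Cmul (a, 0) (matvec m K v i))).
    { apply Ceq; unfold Cadd, Copp, C0 in *; simpl in *; injection E; intros; lra. }
    rewrite Ev. unfold n1 at 1. unfold Copp, Cmul; simpl. rewrite !Rabs_Ropp.
    replace (a * fst (matvec m K v i) - 0 * snd (matvec m K v i)) with (a * fst (matvec m K v i)) by ring.
    replace (a * snd (matvec m K v i) + 0 * fst (matvec m K v i)) with (a * snd (matvec m K v i)) by ring.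
    rewrite !Rabs_mult.
    assert (Hmv : n1 (matvec m K v i) <= CK * nv).
    { unfold matvec. eapply Rle_trans. apply n1_Csum. unfold nv. rewrite <- sumR_scal.
      apply sumR_le. intros k Hk. eapply Rle_trans. apply n1_mul. apply Rmult_le_compat_r. apply n1_pos.
      unfold CK. eapply Rle_trans.
      - apply (sumR_single_le m (fun k => n1 (K i k)) k); auto. intros; apply n1_pos.
      - apply (sumR_single_le m (fun i => sumR m (fun k => n1 (K i k))) i); auto.
        intros; apply sumR_nonneg; intros; apply n1_pos. }
    unfold n1 in Hmv. pose proof (Rabs_pos a). nra. }
  assert (Hnv : nv <= INR m * (Rabs a * (CK * nv))).
  { unfold nv at 1. rewrite <- sumR_const. apply sumR_le. auto. }
  assert (Hpos : 0 < nv).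
  { unfold nv. apply Rlt_le_trans with (n1 (v i0)).
    destruct (Rle_lt_or_eq_dec 0 (n1 (v i0)) (n1_pos _)) as [Hp|Hp]; auto.
    exfalso. apply Hv0. apply n1_zero; auto.
    apply (sumR_single_le m (fun i => n1 (v i)) i0); auto. intros; apply n1_pos. }
  assert (INR m * (Rabs a * (CK * nv)) = (Rabs a * (INR m * CK)) * nv) by ring.
  assert (X : Rabs a * (INR m * CK) * nv < 1 * nv) by (apply Rmult_lt_compat_r; auto).
  lra.
Qed.


Lemma herm_sandwich m A Bm : Herm m A -> Herm m Bm -> Herm m (mmul m A (mmul m Bm A)).
Proof.
  intros HA HB i j Hi Hj. unfold mmul. rewrite Cconj_Csum.
  setoid_rewrite Csum_mul_l. setoid_rewrite Cconj_Csum.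
  rewrite Csum_swap. apply Csum_ext; intros x Hx. apply Csum_ext; intros y Hy.
  rewrite !Cconj_mul. rewrite (HA i x), (HB x y), (HA y j) by auto. csolve.
Qed.

Lemma ctr_herm m K : Herm m K -> meq m (ctr K) K.
Proof. intros HK i j Hi Hj. unfold ctr. rewrite HK by auto. apply Cconj_conj. Qed.

Section Curve.
Variables (m : nat) (rho K Z : CMat).
Hypothesis Hr : Herm m rho.
Hypothesis Hpd : PosDef m rho.
Hypothesis Htr : mtr m rho = (1, 0).
Hypothesis HK : Herm m K.
Hypothesis HZ : IsSLD m rho Z K.
Hypothesis HZh : Herm m Z.
Hypothesis HZt : mtr m Z = C0.

Definition Wm : CMat := mscale (1/4, 0) (mmul m K (mmul m rho K)).
Definition Tm (s : R) : CMat := madd rho (madd (mscale (s, 0) Z) (mscale (s * s, 0) Wm)).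
Definition tau : R := fst (mtr m Wm).
Definition gc (s : R) : CMat := mscale (/ (1 + s * s * tau), 0) (Tm s).

Lemma W_herm : Herm m Wm.
Proof. unfold Wm. apply herm_mscale; auto. apply herm_sandwich; auto. Qed.

Lemma tau_nonneg : 0 <= tau.
Proof.
  unfold tau, Wm. rewrite mtr_mscale.
  rewrite (mtr_ext m _ (mmul m (ctr K) (mmul m rho K))).
  2:{ apply mmul_ext. apply meq_sym, ctr_herm; auto. apply meq_refl. }
  rewrite tr_col. unfold Cmul; simpl. pose proof (sum_qf_nonneg m rho (fun j i => K i j) Hpd).
  pose proof (herm_tr_real m (mmul m K (mmul m rho K)) (herm_sandwich m K rho HK Hr)) as Hs.
  rewrite (mtr_ext m _ (mmul m (ctr K) (mmul m rho K))) in Hs.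
  2:{ apply mmul_ext. apply meq_sym, ctr_herm; auto. apply meq_refl. }
  rewrite tr_col in Hs. rewrite Hs. lra.
Qed.

Lemma Tm_herm s : Herm m (Tm s).
Proof.
  unfold Tm. apply herm_madd; auto. apply herm_madd; apply herm_mscale; auto. apply W_herm.
Qed.

Lemma Tm_tr s : mtr m (Tm s) = (1 + s * s * tau, 0).
Proof.
  unfold Tm. rewrite !mtr_madd, !mtr_mscale, Htr, HZt.
  pose proof (herm_tr_real m Wm W_herm). unfold tau.
  apply Ceq; unfold Cadd, Cmul, C0; simpl; rewrite ?H; ring.
Qed.

Lemma Tm_qf s v : qf m (Tm s) v =
  qf m rho (fun i => Cadd (v i) (Cmul (s / 2, 0) (matvec m K v i))).
Proof.
  change (qf m (Tm s) v) with (Bf m (Tm s) v v).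
  change (qf m rho (fun i => Cadd (v i) (Cmul (s / 2, 0) (matvec m K v i))))
    with (Bf m rho (fun i => Cadd (v i) (Cmul (s / 2, 0) (matvec m K v i)))
                   (fun i => Cadd (v i) (Cmul (s / 2, 0) (matvec m K v i)))).
  rewrite B_expand. unfold Tm. rewrite !B_madd, !B_mscale.
  rewrite (B_meq m Z _ v v (meq_sym _ _ _ HZ)).
  rewrite B_mscale, B_madd, B_mmul_r, B_mmul_l by auto.
  unfold Wm. rewrite B_mscale, B_mmul_l, B_mmul_r by auto.
  apply Ceq; unfold Cadd, Cmul; simpl; field.
Qed.

Definition CKc : R := sumR m (fun i => sumR m (fun k => n1 (K i k))).
Definition eps0 : R := 1 / (INR m * CKc + 1).

Lemma CKc_nonneg : 0 <= CKc.
Proof. unfold CKc. apply sumR_nonneg; intros; apply sumR_nonneg; intros; apply n1_pos. Qed.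

Lemma eps0_pos : 0 < eps0.
Proof.
  unfold eps0. pose proof CKc_nonneg. pose proof (pos_INR m).
  apply Rdiv_lt_0_compat. lra. nra.
Qed.

Lemma Tm_pd s : Rabs s < eps0 -> PosDef m (Tm s).
Proof.
  intros Hs v Hv. change (0 < fst (qf m (Tm s) v)). rewrite Tm_qf. apply Hpd.
  apply congr_nonzero; auto.
  fold CKc. pose proof CKc_nonneg. pose proof (pos_INR m).
  unfold eps0 in Hs.
  assert (Hx : 0 <= INR m * CKc) by nra.
  replace (Rabs (s / 2)) with (Rabs s / 2).
  2:{ unfold Rdiv. rewrite Rabs_mult, Rabs_inv, (Rabs_right 2); lra. }
  pose proof (Rabs_pos s).
  assert (Rabs s * (INR m * CKc + 1) < 1).
  { apply (Rmult_lt_compat_r (INR m * CKc + 1)) in Hs; [|lra].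
    replace (1 / (INR m * CKc + 1) * (INR m * CKc + 1)) with 1 in Hs by (field; lra). lra. }
  nra.
Qed.

Lemma gc_pdot s : Rabs s < eps0 -> Pdot m (gc s).
Proof.
  intros Hs. pose proof tau_nonneg.
  assert (Hd : 0 < 1 + s * s * tau) by nra.
  split; [|split].
  - unfold gc. apply herm_mscale; auto. apply Tm_herm.
  - intros v Hv. unfold gc. unfold qf in *.
    change (0 < fst (Bf m (mscale (/ (1 + s * s * tau), 0) (Tm s)) v v)).
    rewrite B_mscale. unfold Cmul; simpl.
    pose proof (Tm_pd s Hs v Hv). change (0 < fst (Bf m (Tm s) v v)) in H0.
    assert (0 < / (1 + s * s * tau)) by (apply Rinv_0_lt_compat; auto).
    replace (0 * snd (Bf m (Tm s) v v)) with 0 by ring. nra.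
  - unfold gc. rewrite mtr_mscale, Tm_tr. apply Ceq; unfold Cmul; simpl; field; lra.
Qed.

Lemma poly_deriv (a b c : R) : derivable_pt_lim (fun s => a + b * s + c * (s * s)) 0 b.
Proof.
  intros eps He. assert (Hp : 0 < eps / (Rabs c + 1)).
  { apply Rdiv_lt_0_compat; auto. pose proof (Rabs_pos c); lra. }
  exists (mkposreal _ Hp). intros h Hh Hlt. simpl in Hlt.
  replace ((a + b * (0 + h) + c * ((0 + h) * (0 + h)) - (a + b * 0 + c * (0 * 0))) / h - b) with (c * h)
    by (field; auto).
  rewrite Rabs_mult. pose proof (Rabs_pos c). pose proof (Rabs_pos h).
  apply Rle_lt_trans with ((Rabs c + 1) * Rabs h). nra.
  apply Rlt_le_trans with ((Rabs c + 1) * (eps / (Rabs c + 1))). apply Rmult_lt_compat_l; lra.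
  right; field; lra.
Qed.

Lemma quot_deriv (a b c d : R) :
  derivable_pt_lim (fun s => (a + b * s + c * (s * s)) / (1 + 0 * s + d * (s * s))) 0 b.
Proof.
  pose proof (derivable_pt_lim_div (fun s => a + b * s + c * (s * s)) (fun s => 1 + 0 * s + d * (s * s)) 0 b 0
    (poly_deriv a b c) (poly_deriv 1 0 d) ltac:(lra)) as H.
  cbv beta in H.
  replace ((b * (1 + 0 * 0 + d * (0 * 0)) - 0 * (a + b * 0 + c * (0 * 0))) / Rsqr (1 + 0 * 0 + d * (0 * 0)))
    with b in H by (unfold Rsqr; field).
  eapply deriv_ext. exact H. intros; reflexivity.
Qed.

Lemma gc_curve : CurveThrough m rho Z gc.
Proof.
  split; [|split].
  - exists eps0. split. apply eps0_pos. intros; apply gc_pdot; auto.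
  - intros i j Hi Hj. unfold gc, Tm, mscale, madd. apply Ceq; unfold Cmul, Cadd; simpl; field.
  - intros i j Hi Hj. split.
    + eapply deriv_ext. apply (quot_deriv (fst (rho i j)) (fst (Z i j)) (fst (Wm i j)) tau).
      intros s. unfold gc, Tm, mscale, madd, Cmul, Cadd; simpl.
      replace (1 + 0 * s + tau * (s * s)) with (1 + s * s * tau) by ring. unfold Rdiv. ring.
    + eapply deriv_ext. apply (quot_deriv (snd (rho i j)) (snd (Z i j)) (snd (Wm i j)) tau).
      intros s. unfold gc, Tm, mscale, madd, Cmul, Cadd; simpl.
      replace (1 + 0 * s + tau * (s * s)) with (1 + s * s * tau) by ring. unfold Rdiv. ring.
Qed.
End Curve.


Lemma IsGrad_meq m F rho G G' : meq m G G' -> IsGrad m F rho G -> IsGrad m F rho G'.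
Proof.
  intros E [[Hh Ht] Hd]. split.
  - split. intros i j Hi Hj. rewrite <- !E by auto. apply Hh; auto.
    rewrite <- (mtr_ext m G G' E). auto.
  - intros X HX L L' HL HL' g Hg. apply (Hd X HX L L'); auto.
    eapply meq_trans. exact HL. apply meq_sym; auto.
Qed.

Lemma ode_grad m rho M i j : Cmul (-1, 0) (odeRHS m rho M i j) = gradFormula m rho M i j.
Proof. unfold odeRHS, gradFormula, madd, mscale, Copp. csolve. Qed.

Lemma herm_part m rho Z L : Herm m rho -> Herm m Z -> IsSLD m rho Z L ->
  IsSLD m rho Z (fun i j => Cmul (1/2, 0) (Cadd (L i j) (Cconj (L j i)))).
Proof.
  intros Hr HZ HL i j Hi Hj.
  assert (A1 : mmul m rho (fun i j => Cmul (1/2, 0) (Cadd (L i j) (Cconj (L j i)))) i j =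
     Cmul (1/2, 0) (Cadd (mmul m rho L i j) (Cconj (mmul m L rho j i)))).
  { unfold mmul. rewrite Cconj_Csum, <- Csum_plus, Csum_mul_l. apply Csum_ext; intros k Hk.
    rewrite Cconj_mul, (Hr i k) by auto. csolve. }
  assert (A2 : mmul m (fun i j => Cmul (1/2, 0) (Cadd (L i j) (Cconj (L j i)))) rho i j =
     Cmul (1/2, 0) (Cadd (mmul m L rho i j) (Cconj (mmul m rho L j i)))).
  { unfold mmul. rewrite Cconj_Csum, <- Csum_plus, Csum_mul_l. apply Csum_ext; intros k Hk.
    rewrite Cconj_mul, (Hr k j) by auto. csolve. }
  unfold mscale, madd at 1. rewrite A1, A2.
  pose proof (HL i j Hi Hj) as E1. pose proof (HL j i Hj Hi) as E2.
  rewrite HZ in E2 by auto. unfold mscale, madd in E1, E2.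
  rewrite <- E1.
  assert (E3 : Cconj (Cmul (1/2, 0) (Cadd (mmul m rho L j i) (mmul m L rho j i))) = Z i j).
  { rewrite E2. apply Cconj_conj. }
  rewrite <- E1 in E3. apply Ceq; unfold Cconj, Cmul, Cadd in *; simpl in *;
  injection E3; intros; lra.
Qed.

Lemma trZK m rho Z K : IsSLD m rho Z K ->
  mtr m (mmul m Z K) = mtr m (mmul m K (mmul m rho K)).
Proof.
  intros HZ. rewrite (mtr_ext m _ (mmul m (mscale (1/2, 0) (madd (mmul m rho K) (mmul m K rho))) K)).
  2:{ apply mmul_ext. apply meq_sym; auto. apply meq_refl. }
  rewrite mtr_mmul_mscale_l, mtr_mmul_madd_l.
  rewrite (mtr_comm m (mmul m rho K) K), mtr_assoc. apply Ceq; unfold Cmul, Cadd; simpl; lra.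
Qed.

Lemma grad_unique m F rho G1 G2 : Pdot m rho -> IsGrad m F rho G1 -> IsGrad m F rho G2 -> meq m G1 G2.
Proof.
  intros [Hr [Hpd Htr]] [[H1h H1t] H1] [[H2h H2t] H2].
  set (Z := madd G1 (mscale (-1, 0) G2)).
  assert (HZh : Herm m Z) by (apply herm_madd; auto; apply herm_mscale; simpl; auto).
  assert (HZt : mtr m Z = C0) by (unfold Z; rewrite mtr_madd, mtr_mscale, H1t, H2t; csolve).
  destruct (sld_exists m rho Z Hpd) as [L0 HL0].
  set (Kh := fun i j => Cmul (1/2, 0) (Cadd (L0 i j) (Cconj (L0 j i)))).
  assert (HK : IsSLD m rho Z Kh) by (apply herm_part; auto).
  assert (HKh : Herm m Kh) by (intros i j Hi Hj; unfold Kh; apply Ceq; cunf; field).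
  destruct (sld_exists m rho G1 Hpd) as [L1 HL1].
  destruct (sld_exists m rho G2 Hpd) as [L2 HL2].
  pose proof (gc_curve m rho Kh Z Hr Hpd Htr HKh HK HZh HZt) as Hc.
  pose proof (H1 Z (conj HZh HZt) L1 Kh HL1 HK _ Hc) as D1.
  pose proof (H2 Z (conj HZh HZt) L2 Kh HL2 HK _ Hc) as D2.
  pose proof (uniqueness_limite _ _ _ _ D1 D2) as EQ.
  rewrite (QF_trace _ _ _ _ _ HL1), (QF_trace _ _ _ _ _ HL2) in EQ.
  assert (T0 : fst (mtr m (mmul m Z Kh)) = 0).
  { unfold Z. rewrite mtr_mmul_madd_l, mtr_mmul_mscale_l. unfold Cadd, Cmul; simpl. rewrite EQ. ring. }
  rewrite (trZK m rho Z Kh HK) in T0.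
  rewrite (mtr_ext m _ (mmul m (ctr Kh) (mmul m rho Kh))) in T0.
  2:{ apply mmul_ext. apply meq_sym, ctr_herm; auto. apply meq_refl. }
  rewrite tr_col in T0.
  assert (K0 : forall i j, (i < m)%nat -> (j < m)%nat -> Kh i j = C0).
  { intros i j Hi Hj. apply (sum_qf_zero m rho (fun j i => Kh i j) Hpd T0 j i Hj Hi). }
  assert (Z0 : meq m Z zeroM).
  { intros i j Hi Hj. rewrite <- (HK i j Hi Hj). unfold mscale, madd, mmul, zeroM.
    rewrite !Csum_zero. csolve.
    - intros k Hk. rewrite K0 by auto. csolve.
    - intros k Hk. rewrite K0 by auto. csolve. }
  intros i j Hi Hj. pose proof (Z0 i j Hi Hj) as E. unfold Z, madd, mscale, zeroM in E.
  apply Ceq; unfold Cadd, Cmul, C0 in E; injection E; intros; lra.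
Qed.

Lemma part2 m U F (HU : OpenHerm m U) (HPU : forall p, Pdot m p -> U p)
  (HFext : forall A B, meq m A B -> F A = F B) (HF : SmoothOn m U F) :
  forall (a b : R) (r dr Mr : R -> CMat),
     (forall t, a < t < b -> Pdot m (r t)) ->
     (forall t, a < t < b -> IsMF m F (r t) (Mr t)) ->
     (forall t i j, a < t < b -> (i < m)%nat -> (j < m)%nat ->
        derivable_pt_lim (fun s => fst (r s i j)) t (fst (dr t i j)) /\
        derivable_pt_lim (fun s => snd (r s i j)) t (snd (dr t i j))) ->
     ((forall t, a < t < b -> IsGrad m F (r t) (mscale (-1, 0) (dr t))) <->
      (forall t, a < t < b -> meq m (dr t) (odeRHS m (r t) (Mr t)))).
Proof.
  intros a b r dr Mr Hp HM _. split.
  - intros HG t Ht. pose proof (part1 m U F HU HPU HFext HF (r t) (Mr t) (Hp t Ht) (HM t Ht)) as HG1.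
    pose proof (grad_unique m F (r t) _ _ (Hp t Ht) (HG t Ht) HG1) as E.
    intros i j Hi Hj. pose proof (E i j Hi Hj) as E1. rewrite <- ode_grad in E1.
    unfold mscale in E1. unfold Cmul in E1. pose proof (f_equal fst E1) as F1; pose proof (f_equal snd E1) as F2. cbn [fst snd] in F1, F2. apply Ceq; lra.
  - intros HE t Ht. eapply IsGrad_meq. 2: apply (part1 m U F HU HPU HFext HF (r t) (Mr t) (Hp t Ht) (HM t Ht)).
    intros i j Hi Hj. rewrite <- ode_grad. unfold mscale. rewrite HE by auto. reflexivity.
Qed.

Theorem lemma2p2 (m : nat) (U : CMat -> Prop) (F : CMat -> R)
  (HU : OpenHerm m U) (HPU : forall p, Pdot m p -> U p)
  (HFext : forall A B, meq m A B -> F A = F B)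
  (HF : SmoothOn m U F) :
  (forall rho M, Pdot m rho -> IsMF m F rho M ->
     IsGrad m F rho (gradFormula m rho M)) /\
  (forall (a b : R) (r dr Mr : R -> CMat),
     (forall t, a < t < b -> Pdot m (r t)) ->
     (forall t, a < t < b -> IsMF m F (r t) (Mr t)) ->
     (forall t i j, a < t < b -> (i < m)%nat -> (j < m)%nat ->
        derivable_pt_lim (fun s => fst (r s i j)) t (fst (dr t i j)) /\
        derivable_pt_lim (fun s => snd (r s i j)) t (snd (dr t i j))) ->
     ((forall t, a < t < b -> IsGrad m F (r t) (mscale (-1, 0) (dr t))) <->
      (forall t, a < t < b -> meq m (dr t) (odeRHS m (r t) (Mr t))))).
Proof.
  split. apply (part1 m U F); auto. apply (part2 m U F); auto.
Qed.
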